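(* Let $k\ge1$ be an integer and $\alpha>\beta>0$. Then $$ \int_{-1}^1(1-x)^{\alpha+1}(1+x)^{\beta+1}W(x)\,dx=\frac{(\rho^2-\eta^2)(\rho^2-\sigma^2)}{\rho(\rho-1)}\,{\bf h}_k^2 . $$
   Context: $y=P_k^{(\alpha,\beta)}(x)$ is the Jacobi polynomial in the standard (Szegő) normalization, orthogonal on $[-1,1]$ with weight $(1-x)^\alpha(1+x)^\beta$, with squared norm ${\bf h}_k^2=\frac{2^{\alpha+\beta+1}\Gamma(k+\alpha+1)\Gamma(k+\beta+1)}{(2k+\alpha+\beta+1)\,k!\,\Gamma(k+\alpha+\beta+1)}$. Put $\eta=\alpha-\beta$, $\sigma=\alpha+\beta$, $\rho=2k+\alpha+\beta$, and $$W(x)=(\rho^2-\sigma^2)y^2-4(\eta+\sigma x)yy'+4(1-x^2)y'^2 .$$ *)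

(* Defs.v *)
From Stdlib Require Import Reals.
From Coquelicot Require Import Coquelicot.
Open Scope R_scope.

(* Real power x^a for x >= 0, with the convention 0^a = 0 (a > 0 in our uses). *)
Definition rpow (x a : R) : R :=
  match Rlt_dec 0 x with left _ => Rpower x a | right _ => 0 end.

Definition Gamma (s : R) : R :=
  RInt_gen (fun t => rpow t (s - 1) * exp (- t)) (at_right 0) (Rbar_locally p_infty).

Fixpoint falling (a : R) (j : nat) : R :=
  match j with
  | O => 1
  | S j' => falling a j' * (a - INR j')
  end.

Definition gbinom (a : R) (j : nat) : R := falling a j / INR (Factorial.fact j).

(* Jacobi polynomial, standard (Szego) normalization, Szego (4.3.2):
   P_k^(al,be)(x) = sum_{m=0}^k binom(k+al, k-m) binom(k+be, m) ((x-1)/2)^m ((x+1)/2)^(k-m) *)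
Definition jacobiP (k : nat) (al be : R) (x : R) : R :=
  sum_f_R0 (fun m => gbinom (INR k + al) (k - m) * gbinom (INR k + be) m
                     * ((x - 1) / 2) ^ m * ((x + 1) / 2) ^ (k - m)) k.

Definition hk2 (k : nat) (al be : R) : R :=
  Rpower 2 (al + be + 1) * Gamma (INR k + al + 1) * Gamma (INR k + be + 1)
  / ((2 * INR k + al + be + 1) * INR (Factorial.fact k) * Gamma (INR k + al + be + 1)).

Definition eta_ (al be : R) : R := al - be.
Definition sigma_ (al be : R) : R := al + be.
Definition rho_ (k : nat) (al be : R) : R := 2 * INR k + al + be.

Definition W (k : nat) (al be : R) (x : R) : R :=
  let y := jacobiP k al be x in
  let y' := Derive (jacobiP k al be) x in
  (rho_ k al be ^ 2 - sigma_ al be ^ 2) * y ^ 2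
  - 4 * (eta_ al be + sigma_ al be * x) * y * y'
  + 4 * (1 - x ^ 2) * y' ^ 2.

(* Main.v *)
Require Import Defs.
From Stdlib Require Import Reals Lra Lia Psatz FunctionalExtensionality Classical.
From Coquelicot Require Import Coquelicot.
Open Scope R_scope.

Lemma rpow_pos x s : 0 < x -> rpow x s = Rpower x s.
Proof. intros H; unfold rpow; destruct (Rlt_dec 0 x); [reflexivity|lra]. Qed.

Lemma rpow_nonpos x s : x <= 0 -> rpow x s = 0.
Proof. intros H; unfold rpow; destruct (Rlt_dec 0 x); [lra|reflexivity]. Qed.

Lemma rpow_ge0 x s : 0 <= rpow x s.
Proof. unfold rpow; destruct (Rlt_dec 0 x); [unfold Rpower; left; apply exp_pos|lra]. Qed.

Lemma rpow_gt0 x s : 0 < x -> 0 < rpow x s.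
Proof. intros H; rewrite rpow_pos by lra; unfold Rpower; apply exp_pos. Qed.

Lemma rpow_plus x s t : 0 <= x -> rpow x (s + t) = rpow x s * rpow x t.
Proof.
  intros H; destruct (Rle_lt_or_eq_dec 0 x H) as [H'|H'].
  - rewrite !rpow_pos by lra; apply Rpower_plus.
  - subst; rewrite !rpow_nonpos by lra; ring.
Qed.

Lemma rpow_1 x : 0 <= x -> rpow x 1 = x.
Proof.
  intros H; destruct (Rle_lt_or_eq_dec 0 x H) as [H'|H'].
  - rewrite rpow_pos by lra; apply Rpower_1; lra.
  - subst; rewrite rpow_nonpos by lra; ring.
Qed.

Lemma rpow_S x s : 0 <= x -> rpow x (s + 1) = rpow x s * x.
Proof. intros H; rewrite rpow_plus, rpow_1; auto. Qed.

Lemma rpow_mult x y s : 0 <= x -> 0 <= y -> rpow (x * y) s = rpow x s * rpow y s.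
Proof.
  intros Hx Hy.
  destruct (Rle_lt_or_eq_dec 0 x Hx) as [Hx'|Hx']; [|subst; rewrite !(rpow_nonpos 0) by lra;
    rewrite Rmult_0_l, rpow_nonpos by lra; ring].
  destruct (Rle_lt_or_eq_dec 0 y Hy) as [Hy'|Hy']; [|subst; rewrite !(rpow_nonpos 0) by lra;
    rewrite Rmult_0_r, rpow_nonpos by lra; ring].
  rewrite !rpow_pos by nra. symmetry; apply Rpower_mult_distr; lra.
Qed.

Lemma rpow_nat x n : 0 < x -> rpow x (INR n) = x ^ n.
Proof. intros H; rewrite rpow_pos by lra; apply Rpower_pow; lra. Qed.

Lemma rpow_small s eps : 0 < s -> 0 < eps ->
  exists del, 0 < del /\ forall h, Rabs h < del -> rpow h s < eps.
Proof.
  intros Hs He. exists (Rpower eps (/ s)). split; [unfold Rpower; apply exp_pos|].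
  intros h Hh. destruct (Rle_or_lt h 0) as [H0|H0].
  - rewrite rpow_nonpos by lra; lra.
  - rewrite rpow_pos by lra. rewrite Rabs_right in Hh by lra.
    replace eps with (Rpower (Rpower eps (/ s)) s).
    + apply Rlt_Rpower_l; auto.
    + rewrite Rpower_mult. rewrite Rinv_l by lra. apply Rpower_1; lra.
Qed.

Lemma rpow_cont s x : 0 < s -> continuous (fun t => rpow t s) x.
Proof.
  intros Hs. apply continuity_pt_filterlim.
  destruct (Rtotal_order x 0) as [Hx|[Hx|Hx]].
  - (* locally zero *)
    intros eps Heps. exists (-x); split; [lra|].
    intros y [_ Hy]. simpl in *. unfold R_dist in *.
    assert (y < 0) by (unfold Rabs in Hy; destruct (Rcase_abs (y - x)); lra).
    rewrite !(rpow_nonpos y), (rpow_nonpos x) by lra.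
    rewrite Rminus_0_r, Rabs_R0; auto.
  - subst. intros eps Heps. destruct (rpow_small s eps Hs Heps) as [d [Hd H]].
    exists d; split; auto. intros y [_ Hy]. simpl in *. unfold R_dist in *.
    rewrite (rpow_nonpos 0) by lra. rewrite Rminus_0_r. rewrite Rabs_right.
    + apply H; auto. rewrite Rminus_0_r in Hy; auto.
    + apply Rle_ge, rpow_ge0.
  - apply derivable_continuous_pt.
    exists (s * Rpower x (s - 1)).
    apply is_derive_Reals.
    apply (is_derive_ext_loc (fun t => Rpower t s)).
    + exists (mkposreal x Hx). intros t Ht. unfold ball in Ht; simpl in Ht.
      unfold AbsRing_ball, abs, minus, plus, opp in Ht; simpl in Ht.
      rewrite rpow_pos; auto. unfold Rabs in Ht; destruct (Rcase_abs _); lra.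
    + apply is_derive_Reals, derivable_pt_lim_power; auto.
Qed.

Lemma rpow_derive s x : 1 < s -> is_derive (fun t => rpow t s) x (s * rpow x (s - 1)).
Proof.
  intros Hs.
  destruct (Rtotal_order x 0) as [Hx|[Hx|Hx]].
  - rewrite (rpow_nonpos x) by lra. rewrite Rmult_0_r.
    apply (is_derive_ext_loc (fun _ => 0)).
    + exists (mkposreal (-x) ltac:(lra)). intros t Ht. unfold ball in Ht; simpl in Ht.
      unfold AbsRing_ball, abs, minus, plus, opp in Ht; simpl in Ht.
      rewrite rpow_nonpos; auto. unfold Rabs in Ht; destruct (Rcase_abs _); lra.
    + apply is_derive_Reals, derivable_pt_lim_const.
  - subst. rewrite (rpow_nonpos 0) by lra. rewrite Rmult_0_r.
    apply is_derive_Reals. intros eps Heps.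
    destruct (rpow_small (s - 1) eps ltac:(lra) Heps) as [d [Hd H]].
    exists (mkposreal d Hd). intros h Hh0 Hh. simpl in Hh.
    rewrite Rplus_0_l, (rpow_nonpos 0) by lra. rewrite !Rminus_0_r.
    destruct (Rle_or_lt h 0) as [H0|H0].
    + rewrite rpow_nonpos by lra. unfold Rdiv; rewrite Rmult_0_l, Rabs_R0; auto.
    + replace s with ((s - 1) + 1) at 1 by ring. rewrite rpow_S by lra.
      unfold Rdiv; rewrite Rmult_assoc, Rinv_r, Rmult_1_r by lra.
      rewrite Rabs_right by (apply Rle_ge, rpow_ge0). apply H; auto.
  - rewrite rpow_pos by auto.
    apply (is_derive_ext_loc (fun t => Rpower t s)).
    + exists (mkposreal x Hx). intros t Ht. unfold ball in Ht; simpl in Ht.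
      unfold AbsRing_ball, abs, minus, plus, opp in Ht; simpl in Ht.
      rewrite rpow_pos; auto. unfold Rabs in Ht; destruct (Rcase_abs _); lra.
    + apply is_derive_Reals, derivable_pt_lim_power; auto.
Qed.

Definition T (n : nat) (C : nat -> R) (x : R) : R :=
  sum_f_R0 (fun m => C m * ((x - 1) / 2) ^ m * ((x + 1) / 2) ^ (n - m)) n.

Definition JA (k : nat) (a b : R) (m : nat) : R :=
  gbinom (INR k + a) (k - m) * gbinom (INR k + b) m.

Lemma jacobiP_T k a b x : jacobiP k a b x = T k (JA k a b) x.
Proof. reflexivity. Qed.

Lemma is_derive_sum (f : nat -> R -> R) (df : nat -> R) n x :
  (forall m, is_derive (f m) x (df m)) ->
  is_derive (fun y => sum_f_R0 (fun m => f m y) n) x (sum_f_R0 df n).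
Proof.
  intros H. induction n as [|n IH]; simpl.
  - apply H.
  - apply (is_derive_plus (fun y => sum_f_R0 (fun m => f m y) n) (f (S n))); auto.
Qed.

Lemma T_derive n C x :
  is_derive (T n C) x
    (/ 2 * sum_f_R0 (fun m => C m * (INR m * ((x - 1) / 2) ^ (pred m) * ((x + 1) / 2) ^ (n - m)
        + INR (n - m) * ((x - 1) / 2) ^ m * ((x + 1) / 2) ^ (pred (n - m)))) n).
Proof.
  rewrite scal_sum. unfold T.
  apply is_derive_sum. intros m.
  auto_derive; auto. unfold Rdiv, Rminus. ring.
Qed.

Lemma sum_shift (f : nat -> R) k : sum_f_R0 f (S k) = f O + sum_f_R0 (fun i => f (S i)) k.
Proof.
  induction k as [|k IH].
  - simpl; ring.
  - rewrite tech5, IH. simpl. ring.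
Qed.

Lemma T_derive_S k C x :
  is_derive (T (S k) C) x
    (/ 2 * T k (fun m => C (S m) * INR (S m) + C m * INR (S k - m)) x).
Proof.
  eapply is_derive_ext; [intros; reflexivity|].
  replace (/ 2 * T k (fun m => C (S m) * INR (S m) + C m * INR (S k - m)) x) with
    (/ 2 * sum_f_R0 (fun m => C m * (INR m * ((x - 1) / 2) ^ (pred m) * ((x + 1) / 2) ^ (S k - m)
        + INR (S k - m) * ((x - 1) / 2) ^ m * ((x + 1) / 2) ^ (pred (S k - m)))) (S k)).
  { apply T_derive. }
  f_equal.
  rewrite (sum_eq _ (fun m => C m * INR m * ((x - 1) / 2) ^ (pred m) * ((x + 1) / 2) ^ (S k - m)
      + C m * INR (S k - m) * ((x - 1) / 2) ^ m * ((x + 1) / 2) ^ (pred (S k - m))))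
    by (intros; ring).
  rewrite sum_plus.
  rewrite sum_shift, tech5.
  rewrite Nat.sub_diag. simpl (INR 0). rewrite !Rmult_0_r, !Rmult_0_l, Rplus_0_l, Rplus_0_r.
  unfold T. rewrite <- sum_plus. apply sum_eq. intros i Hi.
  replace (S k - S i)%nat with (k - i)%nat by lia.
  replace (pred (S k - i)) with (k - i)%nat by lia.
  simpl pred. ring.
Qed.

Lemma gbinom_0 N : gbinom N 0 = 1.
Proof. unfold gbinom; simpl; field. Qed.

Lemma gbinom_S N j : gbinom N (S j) * INR (S j) = gbinom N j * (N - INR j).
Proof.
  unfold gbinom. simpl falling. rewrite fact_simpl, mult_INR.
  assert (INR (Factorial.fact j) <> 0) by (apply INR_fact_neq_0).
  assert (INR (S j) <> 0) by (apply not_0_INR; lia).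
  field; auto.
Qed.

Lemma gbinom_S' N j : gbinom N (S j) = gbinom N j * (N - INR j) / INR (S j).
Proof.
  rewrite <- gbinom_S. field. apply not_0_INR; lia.
Qed.

Lemma jacobi_D1 k a b x :
  is_derive (jacobiP (S k) a b) x ((INR k + a + b + 2) / 2 * jacobiP k (a + 1) (b + 1) x).
Proof.
  eapply is_derive_ext; [intros; symmetry; apply jacobiP_T|].
  replace ((INR k + a + b + 2) / 2 * jacobiP k (a + 1) (b + 1) x) with
    (/ 2 * T k (fun m => JA (S k) a b (S m) * INR (S m) + JA (S k) a b m * INR (S k - m)) x).
  { apply T_derive_S. }
  rewrite jacobiP_T. unfold T. rewrite !scal_sum. apply sum_eq. intros m Hm.
  unfold JA.
  replace (INR (S k) + a) with (INR k + (a + 1)) by (rewrite S_INR; ring).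
  replace (INR (S k) + b) with (INR k + (b + 1)) by (rewrite S_INR; ring).
  replace (S k - S m)%nat with (k - m)%nat by lia.
  replace (S k - m)%nat with (S (k - m)) by lia.
  rewrite !gbinom_S'. rewrite minus_INR by lia. rewrite !S_INR.
  assert (INR m + 1 <> 0) by (generalize (pos_INR m); lra).
  assert (INR k - INR m + 1 <> 0) by (rewrite <- minus_INR by lia; generalize (pos_INR (k - m)); lra).
  field; repeat split; auto; generalize (pos_INR (k - m)); lra.
Qed.

Definition dT (n : nat) (C : nat -> R) (x : R) : R :=
  / 2 * sum_f_R0 (fun m => C m * (INR m * ((x - 1) / 2) ^ (pred m) * ((x + 1) / 2) ^ (n - m)
        + INR (n - m) * ((x - 1) / 2) ^ m * ((x + 1) / 2) ^ (pred (n - m)))) n.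

Lemma T_derive' n C x : is_derive (T n C) x (dT n C x).
Proof. apply T_derive. Qed.

Definition Xc k a b (m : nat) : R :=
  if (m <=? k)%nat then JA k (a + 1) (b + 1) m * (INR m + a + 1) else 0.
Definition Yc k a b (m : nat) : R :=
  match m with O => 0 | S j => JA k (a + 1) (b + 1) j * (INR (S k) + b - INR j) end.

Lemma coef_D2 k a b m : (m <= S k)%nat ->
  Xc k a b m + Yc k a b m = INR (S k) * JA (S k) a b m.
Proof.
  intros Hm. unfold Xc, Yc, JA.
  replace (INR (S k) + a) with (INR k + (a + 1)) by (rewrite S_INR; ring).
  replace (INR (S k) + b) with (INR k + (b + 1)) by (rewrite S_INR; ring).
  destruct m as [|j].
  - simpl (0 <=? k)%nat. rewrite !Nat.sub_0_r. rewrite gbinom_S'. rewrite !gbinom_0.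
    rewrite !S_INR. simpl INR. field. generalize (pos_INR k); lra.
  - destruct (Nat.eq_dec j k) as [->|Hjk].
    + replace (S k <=? k)%nat with false by (symmetry; apply Nat.leb_gt; lia).
      rewrite !Nat.sub_diag. rewrite gbinom_S'. rewrite !gbinom_0. rewrite !S_INR. field.
      generalize (pos_INR k); lra.
    + replace (S j <=? k)%nat with true by (symmetry; apply Nat.leb_le; lia).
      replace (S k - S j)%nat with (S (k - S j)) by lia.
      replace (k - j)%nat with (S (k - S j)) by lia.
      rewrite !gbinom_S'. rewrite !S_INR. rewrite minus_INR by lia. rewrite S_INR.
      assert (INR j + 1 <> 0) by (generalize (pos_INR j); lra).
      assert (INR k - (INR j + 1) + 1 <> 0).
      { assert (INR j < INR k) by (apply lt_INR; lia). lra. }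
      field; auto.
Qed.

Lemma sum_scal_l (c : R) (f : nat -> R) n : sum_f_R0 (fun i => c * f i) n = c * sum_f_R0 f n.
Proof. induction n; simpl; [ring|rewrite IHn; ring]. Qed.

Lemma jacobi_D2 k a b x :
  (1 - x ^ 2) * dT k (JA k (a + 1) (b + 1)) x
  + ((b - a) - (a + b + 2) * x) * jacobiP k (a + 1) (b + 1) x
  = -2 * INR (S k) * jacobiP (S k) a b x.
Proof.
  set (u := (x - 1) / 2). set (v := (x + 1) / 2).
  assert (E : forall m, (m <= k)%nat ->
    (1 - x ^ 2) * (/ 2 * (JA k (a + 1) (b + 1) m * (INR m * u ^ (pred m) * v ^ (k - m)
        + INR (k - m) * u ^ m * v ^ (pred (k - m)))))
    + ((b - a) - (a + b + 2) * x) * (JA k (a + 1) (b + 1) m * u ^ m * v ^ (k - m))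
    = -2 * (Xc k a b m * u ^ m * v ^ (S k - m) + Yc k a b (S m) * u ^ (S m) * v ^ (S k - S m))).
  { intros m Hm. unfold Xc, Yc.
    replace (m <=? k)%nat with true by (symmetry; apply Nat.leb_le; lia).
    replace (S k - S m)%nat with (k - m)%nat by lia.
    replace (S k - m)%nat with (S (k - m)) by lia.
    assert (Hu : INR m * u ^ pred m * u = INR m * u ^ m).
    { destruct m; simpl; ring. }
    assert (Hv : INR (k - m) * v ^ pred (k - m) * v = INR (k - m) * v ^ (k - m)).
    { destruct (k - m)%nat; simpl; ring. }
    assert (Hx : 1 - x ^ 2 = -4 * u * v) by (unfold u, v; field).
    assert (Hx2 : x = u + v) by (unfold u, v; field).
    assert (Hx3 : 1 = v - u) by (unfold u, v; field).
    rewrite minus_INR by lia. rewrite minus_INR in Hv by lia.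
    rewrite Hx. simpl pow.
    transitivity (-2 * JA k (a + 1) (b + 1) m * (INR m * u ^ pred m * u * v ^ (k - m) * v
      + (INR k - INR m) * v ^ pred (k - m) * v * u ^ m * u
      + ((a + 1) * v + (b + 1) * u) * u ^ m * v ^ (k - m))).
    { rewrite Hx2 at 1. replace (b - a) with ((b + 1) * (v - u) - (a + 1) * (v - u)) by (rewrite <- Hx3; ring).
      field. }
    rewrite Hu. replace ((INR k - INR m) * v ^ pred (k - m) * v) with ((INR k - INR m) * v ^ (k - m)) by (rewrite <- Hv; ring).
    rewrite S_INR. ring. }
  unfold dT. rewrite (jacobiP_T k), (jacobiP_T (S k)). unfold T. fold u v.
  transitivity (sum_f_R0 (fun m => -2 * (Xc k a b m * u ^ m * v ^ (S k - m)
       + Yc k a b (S m) * u ^ (S m) * v ^ (S k - S m))) k).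
  { rewrite <- (sum_eq _ _ k E). rewrite sum_plus. f_equal.
    - rewrite <- (sum_scal_l (/2)), <- (sum_scal_l (1 - x^2)). apply sum_eq; intros; ring.
    - rewrite <- sum_scal_l. apply sum_eq; intros; ring. }
  rewrite sum_scal_l, Rmult_assoc. f_equal.
  rewrite sum_plus.
  rewrite <- sum_scal_l.
  rewrite (sum_eq (fun i => INR (S k) * (JA (S k) a b i * u ^ i * v ^ (S k - i)))
                  (fun i => Xc k a b i * u ^ i * v ^ (S k - i) + Yc k a b i * u ^ i * v ^ (S k - i))).
  2:{ intros i Hi. transitivity ((INR (S k) * JA (S k) a b i) * u^i * v^(S k - i)); [ring|]. rewrite <- coef_D2 by auto; ring. }
  rewrite sum_plus. f_equal.
  - rewrite tech5. replace (Xc k a b (S k)) with 0.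
    + ring.
    + unfold Xc. replace (S k <=? k)%nat with false by (symmetry; apply Nat.leb_gt; lia). reflexivity.
  - rewrite sum_shift. replace (Yc k a b 0) with 0 by reflexivity. rewrite !Rmult_0_l, Rplus_0_l. reflexivity.
Qed.

Lemma cont_mult (f g : R -> R) x : continuous f x -> continuous g x -> continuous (fun y => f y * g y) x.
Proof. intros; apply (continuous_mult f g); auto. Qed.
Lemma cont_plus (f g : R -> R) x : continuous f x -> continuous g x -> continuous (fun y => f y + g y) x.
Proof. intros; apply (continuous_plus f g); auto. Qed.
Lemma cont_of_derive (f : R -> R) (x : R) : ex_derive f x -> continuous f x.
Proof. intros H. apply (ex_derive_continuous (K:=R_AbsRing) (V:=R_NormedModule)); auto. Qed.

Lemma cont_poly1 (c d : R) x : continuous (fun y => c + d * y) x.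
Proof. apply cont_of_derive. auto_derive; auto. Qed.

Lemma cont_rpow_lin s c d x : 0 < s -> continuous (fun y => rpow (c + d * y) s) x.
Proof.
  intros Hs. apply (continuous_comp (fun y => c + d * y) (fun t => rpow t s)).
  - apply cont_poly1.
  - apply rpow_cont; auto.
Qed.

Lemma cont_rpow_1m s (x : R) : 0 < s -> continuous (fun y => rpow (1 - y) s) x.
Proof.
  intros Hs. apply (continuous_comp (fun y => 1 - y) (fun t => rpow t s)).
  - apply cont_of_derive; auto_derive; auto.
  - apply rpow_cont; auto.
Qed.
Lemma cont_rpow_1p s (x : R) : 0 < s -> continuous (fun y => rpow (1 + y) s) x.
Proof.
  intros Hs. apply (continuous_comp (fun y => 1 + y) (fun t => rpow t s)).
  - apply cont_of_derive; auto_derive; auto.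
  - apply rpow_cont; auto.
Qed.

Definition wt (a b x : R) : R := rpow (1 - x) a * rpow (1 + x) b.
Definition L (a b : R) (f : R -> R) : R := RInt (fun x => wt a b x * f x) (-1) 1.

Lemma wt_cont a b x : 0 < a -> 0 < b -> continuous (wt a b) x.
Proof.
  intros Ha Hb. unfold wt. apply cont_mult.
  - apply cont_rpow_1m; auto.
  - apply cont_rpow_1p; auto.
Qed.

Lemma RInt_plus_R (f g : R -> R) a b : ex_RInt f a b -> ex_RInt g a b ->
  RInt (fun x => f x + g x) a b = RInt f a b + RInt g a b.
Proof. intros; apply (RInt_plus (V:=R_CompleteNormedModule)); auto. Qed.
Lemma RInt_scal_R (f : R -> R) a b c : ex_RInt f a b ->
  RInt (fun x => c * f x) a b = c * RInt f a b.
Proof. intros; apply (RInt_scal (V:=R_CompleteNormedModule)); auto. Qed.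

Definition Cont (f : R -> R) := forall x, continuous f x.

Lemma L_ex a b f : 0 < a -> 0 < b -> Cont f -> ex_RInt (fun x => wt a b x * f x) (-1) 1.
Proof.
  intros Ha Hb Hf. apply (ex_RInt_continuous (V:=R_CompleteNormedModule)). intros. apply cont_mult; auto. apply wt_cont; auto.
Qed.

Lemma L_plus a b f g : 0 < a -> 0 < b -> Cont f -> Cont g ->
  L a b (fun x => f x + g x) = L a b f + L a b g.
Proof.
  intros. unfold L. rewrite <- RInt_plus_R by (apply L_ex; auto).
  apply RInt_ext. intros; simpl. ring.
Qed.

Lemma L_scal a b c f : 0 < a -> 0 < b -> Cont f ->
  L a b (fun x => c * f x) = c * L a b f.
Proof.
  intros. unfold L. rewrite <- RInt_scal_R by (apply L_ex; auto).
  apply RInt_ext. intros; simpl. ring.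
Qed.

Lemma L_ext a b f g : (forall x, -1 < x < 1 -> f x = g x) -> L a b f = L a b g.
Proof.
  intros H. unfold L. apply RInt_ext. intros x Hx.
  rewrite Rmin_left in Hx by lra. rewrite Rmax_right in Hx by lra. rewrite H; auto.
Qed.

Lemma Cont_plus f g : Cont f -> Cont g -> Cont (fun x => f x + g x).
Proof. intros Hf Hg x; apply cont_plus; auto. Qed.
Lemma Cont_mult f g : Cont f -> Cont g -> Cont (fun x => f x * g x).
Proof. intros Hf Hg x; apply cont_mult; auto. Qed.
Lemma Cont_const c : Cont (fun _ => c).
Proof. intros x; apply continuous_const. Qed.
Lemma Cont_id : Cont (fun x => x).
Proof. intros x; apply continuous_id. Qed.
Lemma Cont_pow n : Cont (fun x => x ^ n).
Proof. intros x. apply cont_of_derive. auto_derive; auto. Qed.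
Lemma Cont_sum (f : nat -> R -> R) n : (forall m, Cont (f m)) -> Cont (fun x => sum_f_R0 (fun m => f m x) n).
Proof.
  intros H. induction n; simpl; auto. apply Cont_plus; auto.
Qed.

Lemma L_sum a b (f : nat -> R -> R) n : 0 < a -> 0 < b -> (forall m, Cont (f m)) ->
  L a b (fun x => sum_f_R0 (fun m => f m x) n) = sum_f_R0 (fun m => L a b (f m)) n.
Proof.
  intros Ha Hb H. induction n; simpl.
  - reflexivity.
  - rewrite L_plus; auto. rewrite IHn; auto. apply Cont_sum; auto.
Qed.

Lemma L_shift a b f : L a b (fun x => (1 - x ^ 2) * f x) = L (a + 1) (b + 1) f.
Proof.
  unfold L, wt. apply RInt_ext. intros x Hx.
  rewrite Rmin_left in Hx by lra. rewrite Rmax_right in Hx by lra.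
  rewrite !rpow_S by lra. simpl. ring.
Qed.

Lemma L_pearson a b p dp : 0 < a -> 0 < b ->
  (forall x, is_derive p x (dp x)) -> Cont dp ->
  L a b (fun x => ((b - a) - (a + b + 2) * x) * p x + (1 - x ^ 2) * dp x) = 0.
Proof.
  intros Ha Hb Hp Hdp.
  set (G := fun x => rpow (1 - x) (a + 1) * rpow (1 + x) (b + 1) * p x).
  set (g := fun x => (- (a + 1) * rpow (1 - x) a) * rpow (1 + x) (b + 1) * p x
      + rpow (1 - x) (a + 1) * ((b + 1) * rpow (1 + x) b) * p x
      + rpow (1 - x) (a + 1) * rpow (1 + x) (b + 1) * dp x).
  assert (Hd : forall x, is_derive G x (g x)).
  { intros x. unfold G, g.
    assert (H1 : is_derive (fun y => rpow (1 - y) (a + 1)) x (- (a + 1) * rpow (1 - x) a)).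
    { replace (- (a + 1) * rpow (1 - x) a) with (scal (-1) ((a + 1) * rpow (1 - x) (a + 1 - 1))).
      2:{ unfold scal; simpl; unfold mult; simpl. replace (a + 1 - 1) with a by ring. ring. }
      apply (is_derive_comp (fun t => rpow t (a + 1)) (fun y => 1 - y)).
      - apply rpow_derive; lra.
      - auto_derive; auto; ring. }
    assert (H2 : is_derive (fun y => rpow (1 + y) (b + 1)) x ((b + 1) * rpow (1 + x) b)).
    { replace ((b + 1) * rpow (1 + x) b) with (scal 1 ((b + 1) * rpow (1 + x) (b + 1 - 1))).
      2:{ unfold scal; simpl; unfold mult; simpl. replace (b + 1 - 1) with b by ring. ring. }
      apply (is_derive_comp (fun t => rpow t (b + 1)) (fun y => 1 + y)).
      - apply rpow_derive; lra.
      - auto_derive; auto; ring. }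
    apply (is_derive_ext (fun y => (rpow (1 - y) (a + 1) * rpow (1 + y) (b + 1)) * p y)).
    { intros; reflexivity. }
    eapply is_derive_ext; [intros; reflexivity|].
    replace (- (a + 1) * rpow (1 - x) a * rpow (1 + x) (b + 1) * p x +
      rpow (1 - x) (a + 1) * ((b + 1) * rpow (1 + x) b) * p x +
      rpow (1 - x) (a + 1) * rpow (1 + x) (b + 1) * dp x) with
      ((- (a + 1) * rpow (1 - x) a * rpow (1 + x) (b + 1) +
        rpow (1 - x) (a + 1) * ((b + 1) * rpow (1 + x) b)) * p x +
       rpow (1 - x) (a + 1) * rpow (1 + x) (b + 1) * dp x) by ring.
    apply (is_derive_mult (fun y => rpow (1 - y) (a + 1) * rpow (1 + y) (b + 1)) p).
    - apply (is_derive_mult (fun y => rpow (1 - y) (a + 1)) (fun y => rpow (1 + y) (b + 1))); auto.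
      intros; apply Rmult_comm.
    - auto.
    - intros; apply Rmult_comm. }
  assert (Hc : forall x, continuous g x).
  { intros x. unfold g.
    assert (Hp' : continuous p x) by (apply cont_of_derive; eexists; apply Hp).
    assert (C1 : forall s, 0 < s -> continuous (fun y => rpow (1 - y) s) x) by (intros; apply cont_rpow_1m; auto).
    assert (C2 : forall s, 0 < s -> continuous (fun y => rpow (1 + y) s) x) by (intros; apply cont_rpow_1p; auto).
    repeat (apply cont_plus || apply cont_mult); auto; try apply continuous_const;
      try apply C1; try apply C2; lra. }
  assert (HI := is_RInt_derive G g (-1) 1 (fun x _ => Hd x) (fun x _ => Hc x)).
  assert (HG1 : G 1 = 0) by (unfold G; rewrite (rpow_nonpos (1 - 1)) by lra; ring).
  assert (HG2 : G (-1) = 0) by (unfold G; rewrite (rpow_nonpos (1 + -1)) by lra; ring).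
  rewrite HG1, HG2 in HI. unfold minus, plus, opp in HI; simpl in HI.
  replace (0 + - 0) with 0 in HI by ring.
  apply is_RInt_unique in HI. rewrite <- HI.
  unfold L. apply RInt_ext. intros x Hx.
  rewrite Rmin_left in Hx by lra. rewrite Rmax_right in Hx by lra.
  unfold g, wt. rewrite !rpow_S by lra. simpl. ring.
Qed.

Lemma jacobiP_0 a b x : jacobiP 0 a b x = 1.
Proof. unfold jacobiP. simpl. rewrite !gbinom_0. ring. Qed.

Lemma T_ex_derive n C x : ex_derive (T n C) x.
Proof. eexists; apply T_derive'. Qed.

Lemma Cont_T n C : Cont (T n C).
Proof. intros x; apply cont_of_derive, T_ex_derive. Qed.

Lemma Cont_jacobiP k a b : Cont (jacobiP k a b).
Proof. intros x. rewrite (functional_extensionality _ _ (jacobiP_T k a b)). apply Cont_T. Qed.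

Lemma Cont_dT n C : Cont (dT n C).
Proof.
  unfold dT. intros x. apply cont_mult; [apply continuous_const|].
  apply (Cont_sum (fun m y => C m * (INR m * ((y - 1) / 2) ^ pred m * ((y + 1) / 2) ^ (n - m) +
          INR (n - m) * ((y - 1) / 2) ^ m * ((y + 1) / 2) ^ pred (n - m)))).
  intros m y. apply cont_of_derive. auto_derive; auto.
Qed.

Definition JD k a b x := dT k (JA k a b) x.

Lemma jacobiP_derive k a b x : is_derive (jacobiP k a b) x (JD k a b x).
Proof.
  eapply is_derive_ext; [intros; symmetry; apply jacobiP_T|]. apply T_derive'.
Qed.



Lemma JD_S k a b x : JD (S k) a b x = (INR k + a + b + 2) / 2 * jacobiP k (a + 1) (b + 1) x.
Proof.
  assert (H1 := jacobiP_derive (S k) a b x).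
  assert (H2 := jacobi_D1 k a b x).
  apply is_derive_unique in H1. apply is_derive_unique in H2. rewrite <- H1, <- H2. reflexivity.
Qed.

Lemma Cont_JD k a b : Cont (JD k a b).
Proof. intros x; apply Cont_dT. Qed.

Lemma lowering k a b q dq : 0 < a -> 0 < b ->
  (forall x, is_derive q x (dq x)) -> Cont dq ->
  L a b (fun x => jacobiP (S k) a b x * q x)
  = / (2 * INR (S k)) * L (a + 1) (b + 1) (fun x => jacobiP k (a + 1) (b + 1) x * dq x).
Proof.
  intros Ha Hb Hq Hdq.
  assert (Cq : Cont q) by (intros x; apply cont_of_derive; eexists; apply Hq).
  set (Q := jacobiP k (a + 1) (b + 1)).
  set (dQ := JD k (a + 1) (b + 1)).
  assert (HP := L_pearson a b (fun x => Q x * q x) (fun x => dQ x * q x + Q x * dq x) Ha Hb).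
  assert (E : forall x, ((b - a) - (a + b + 2) * x) * (Q x * q x) + (1 - x ^ 2) * (dQ x * q x + Q x * dq x)
     = (-2 * INR (S k)) * (jacobiP (S k) a b x * q x) + (1 - x ^ 2) * (Q x * dq x)).
  { intros x. transitivity ((-2 * INR (S k) * jacobiP (S k) a b x) * q x + (1 - x^2) * (Q x * dq x)); [|ring].
    rewrite <- (jacobi_D2 k a b x). unfold Q, dQ, JD. ring. }
  rewrite (L_ext _ _ _ _ (fun x _ => E x)) in HP.
  rewrite L_plus in HP; auto.
  2:{ apply Cont_mult; [apply Cont_const|apply Cont_mult; auto; apply Cont_jacobiP]. }
  2:{ apply Cont_mult; [intros x; apply cont_of_derive; auto_derive; auto|].
      apply Cont_mult; auto; apply Cont_jacobiP. }
  rewrite L_scal, L_shift in HP; auto.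
  2:{ apply Cont_mult; auto; apply Cont_jacobiP. }
  assert (D1 : forall x, is_derive (fun x0 => Q x0 * q x0) x (dQ x * q x + Q x * dq x)).
  { intros x. apply (is_derive_mult Q q); auto.
      - apply jacobiP_derive.
      - intros; simpl; apply Rmult_comm. }
  assert (D2 : Cont (fun x => dQ x * q x + Q x * dq x)).
  { apply Cont_plus; apply Cont_mult; auto; try apply Cont_JD; apply Cont_jacobiP. }
  specialize (HP D1 D2).
  assert (INR (S k) > 0) by (apply lt_0_INR; lia).
  fold Q. field_simplify_eq; [|lra]. lra.
Qed.

Ltac solve_cont := repeat (first [apply Cont_plus | apply Cont_mult | apply Cont_const | apply Cont_id | apply Cont_pow | apply Cont_jacobiP | apply Cont_JD]).

Definition monc (k i : nat) : R :=
  INR (Factorial.fact i) / (INR (Factorial.fact (i - k)) * 2 ^ k * INR (Factorial.fact k)).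

Lemma Mon k : forall a b i, 0 < a -> 0 < b ->
  L a b (fun x => jacobiP k a b x * x ^ i)
  = if (i <? k)%nat then 0 else monc k i * L (a + INR k) (b + INR k) (fun x => x ^ (i - k)).
Proof.
  induction k as [|k IH]; intros a b i Ha Hb.
  - replace ((i <? 0)%nat) with false by reflexivity.
    unfold monc.
    replace (INR (Factorial.fact i) / (INR (Factorial.fact (i - 0)) * 2 ^ 0 * INR (Factorial.fact 0))) with 1
      by (rewrite Nat.sub_0_r; simpl; field; apply INR_fact_neq_0).
    rewrite Rmult_1_l. simpl INR. rewrite !Rplus_0_r. apply L_ext. intros.
    rewrite jacobiP_0, Nat.sub_0_r. ring.
  - rewrite (lowering k a b (fun x => x ^ i) (fun x => INR i * x ^ pred i)); auto.
    2:{ intros x. auto_derive; auto. ring. }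
    2:{ apply Cont_mult; [apply Cont_const|apply Cont_pow]. }
    rewrite (L_ext _ _ _ (fun x => INR i * (jacobiP k (a + 1) (b + 1) x * x ^ pred i))) by (intros; ring).
    rewrite L_scal; [| lra | lra |].
    2:{ apply Cont_mult; [apply Cont_jacobiP|apply Cont_pow]. }
    rewrite IH by lra.
    destruct i as [|j].
    + simpl. ring.
    + simpl pred. replace (S j <? S k)%nat with (j <? k)%nat by reflexivity.
      destruct (j <? k)%nat eqn:Hjk; [ring|].
      replace (a + 1 + INR k) with (a + INR (S k)) by (rewrite S_INR; ring).
      replace (b + 1 + INR k) with (b + INR (S k)) by (rewrite S_INR; ring).
      replace (S j - S k)%nat with (j - k)%nat by reflexivity.
      unfold monc. rewrite !fact_simpl, !mult_INR. simpl pow.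
      assert (INR (Factorial.fact (j - k)) <> 0) by apply INR_fact_neq_0.
      assert (INR (Factorial.fact k) <> 0) by apply INR_fact_neq_0.
      assert (INR (S k) <> 0) by (apply not_0_INR; lia).
      change (S j - S k)%nat with (j - k)%nat. field. repeat split; auto. apply pow_nonzero; lra.
Qed.

Lemma mom1 a b : 0 < a -> 0 < b ->
  L a b (fun x => x) = (b - a) / (a + b + 2) * L a b (fun _ => 1).
Proof.
  intros Ha Hb.
  assert (H := L_pearson a b (fun _ => 1) (fun _ => 0) Ha Hb).
  assert (H1 : forall x, is_derive (fun _ : R => 1) x 0) by (intros; auto_derive; auto).
  specialize (H H1 (Cont_const 0)).
  rewrite (L_ext _ _ _ (fun x => (b - a) * 1 + (-(a + b + 2)) * x)) in H by (intros; ring).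
  rewrite L_plus, !L_scal in H; auto; try apply Cont_const; try apply Cont_id.
  2:{ apply Cont_mult; [apply Cont_const|apply Cont_id]. }
  field_simplify_eq; [|lra]. lra.
Qed.

Lemma mom2 a b : 0 < a -> 0 < b ->
  L a b (fun x => x ^ 2) = ((b - a) * L a b (fun x => x) + L a b (fun _ => 1)) / (a + b + 3).
Proof.
  intros Ha Hb.
  assert (H := L_pearson a b (fun x => x) (fun _ => 1) Ha Hb).
  assert (H1 : forall x, is_derive (fun x : R => x) x 1) by (intros; auto_derive; auto).
  specialize (H H1 (Cont_const 1)).
  rewrite (L_ext _ _ _ (fun x => ((b - a) * x + 1 * 1) + (-(a + b + 3)) * x ^ 2)) in H by (intros; simpl; ring).
  rewrite !L_plus, !L_scal in H by (auto || solve_cont).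
  field_simplify_eq; [|lra]. lra.
Qed.

Fixpoint pc (k : nat) (a b : R) (i : nat) {struct k} : R :=
  match k with
  | O => match i with O => 1 | S _ => 0 end
  | S k' => match i with
            | O => jacobiP (S k') a b 0
            | S i' => (INR k' + a + b + 2) / 2 / INR (S i') * pc k' (a + 1) (b + 1) i'
            end
  end.

Lemma eq_deriv (f g df : R -> R) :
  (forall x, is_derive f x (df x)) -> (forall x, is_derive g x (df x)) -> f 0 = g 0 ->
  forall x, f x = g x.
Proof.
  intros Hf Hg H0 x.
  assert (Hd : forall y, is_derive (fun z => f z - g z) y 0).
  { intros y. replace 0 with (df y - df y) by ring.
    apply (is_derive_minus f g); auto. }
  destruct (MVT_gen (fun z => f z - g z) 0 x (fun _ => 0)) as [c [_ Hc]].
  - intros; apply Hd.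
  - intros y _. apply (proj2 (continuity_pt_filterlim _ _)). apply (cont_of_derive (fun z => f z - g z)). eexists; apply Hd.
  - lra.
Qed.

Lemma poly_derive (c : nat -> R) n x :
  is_derive (fun y => sum_f_R0 (fun i => c i * y ^ i) n) x (sum_f_R0 (fun i => c i * (INR i * x ^ pred i)) n).
Proof.
  apply (is_derive_sum (fun i y => c i * y ^ i)). intros m. auto_derive; auto. ring.
Qed.

Lemma Rep k : forall a b x, jacobiP k a b x = sum_f_R0 (fun i => pc k a b i * x ^ i) k.
Proof.
  induction k as [|k IH]; intros a b x.
  - rewrite jacobiP_0. simpl. ring.
  - apply (eq_deriv (jacobiP (S k) a b) (fun y => sum_f_R0 (fun i => pc (S k) a b i * y ^ i) (S k))
       (fun y => (INR k + a + b + 2) / 2 * jacobiP k (a + 1) (b + 1) y)).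
    + intros; apply jacobi_D1.
    + intros y. eapply is_derive_ext; [intros; reflexivity|].
      replace ((INR k + a + b + 2) / 2 * jacobiP k (a + 1) (b + 1) y) with
        (sum_f_R0 (fun i => pc (S k) a b i * (INR i * y ^ pred i)) (S k)).
      { apply poly_derive. }
      rewrite sum_shift. simpl INR at 1. rewrite Rmult_0_l, Rmult_0_r, Rplus_0_l.
      rewrite IH, <- sum_scal_l. apply sum_eq. intros i Hi.
      change (pc (S k) a b (S i)) with ((INR k + a + b + 2) / 2 / INR (S i) * pc k (a + 1) (b + 1) i). change (pred (S i)) with i.
      assert (INR (S i) <> 0) by (apply not_0_INR; lia).
      field; auto.
    + rewrite sum_shift. simpl pc at 1.
      rewrite (sum_eq _ (fun _ => 0)) by (intros; simpl; ring).
      assert (Z : forall n, sum_f_R0 (fun _ => 0) n = 0) by (induction n; simpl; auto; rewrite IHn; ring).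
      rewrite Z. simpl. ring.
Qed.

Lemma pc_top k a b : pc (S k) a b (S k) = (INR k + a + b + 2) / 2 / INR (S k) * pc k (a + 1) (b + 1) k.
Proof. reflexivity. Qed.

Lemma gbinom_1 N : gbinom N 1 = N.
Proof. unfold gbinom; simpl. field. Qed.
Lemma gbinom_2 N : gbinom N 2 = N * (N - 1) / 2.
Proof. unfold gbinom; simpl. field. Qed.

Lemma pc_d k : forall a b, 0 < a -> 0 < b ->
  pc (S k) a b k = pc (S k) a b (S k) * (INR (S k) * (a - b) / (2 * INR (S k) + a + b)).
Proof.
  induction k as [|k IH]; intros a b Ha Hb.
  - simpl pc. unfold jacobiP. simpl. rewrite !gbinom_0, !gbinom_1. field. lra.
  - change (pc (S (S k)) a b (S k)) with ((INR (S k) + a + b + 2) / 2 / INR (S k) * pc (S k) (a + 1) (b + 1) k).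
    rewrite pc_top. rewrite IH by lra.
    assert (INR (S k) > 0) by (apply lt_0_INR; lia).
    rewrite !S_INR in *. field. repeat split; lra.
Qed.

Lemma pc_e k : forall a b, 0 < a -> 0 < b ->
  pc (S (S k)) a b k = pc (S (S k)) a b (S (S k)) *
    (let K := INR (S (S k)) in let r := 2 * K + a + b in
     - (K * (K - 1) * (r - (a - b) ^ 2)) / (2 * r * (r - 1))).
Proof.
  induction k as [|k IH]; intros a b Ha Hb.
  - simpl pc. unfold jacobiP. simpl. rewrite !gbinom_0, !gbinom_1, !gbinom_2. field. lra.
  - change (pc (S (S (S k))) a b (S k)) with ((INR (S (S k)) + a + b + 2) / 2 / INR (S k) * pc (S (S k)) (a + 1) (b + 1) k).
    rewrite pc_top. rewrite IH by lra. cbv zeta.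
    assert (INR k >= 0) by (apply Rle_ge, pos_INR).
    rewrite !S_INR in *. field. repeat split; lra.
Qed.

Lemma isd_mult (f g : R -> R) df dg x : is_derive f x df -> is_derive g x dg ->
  is_derive (fun t => f t * g t) x (df * g x + f x * dg).
Proof.
  intros Hf Hg. apply (is_derive_mult f g); auto. intros; simpl; apply Rmult_comm.
Qed.
Lemma isd_plus (f g : R -> R) df dg x : is_derive f x df -> is_derive g x dg ->
  is_derive (fun t => f t + g t) x (df + dg).
Proof. intros Hf Hg. apply (is_derive_plus f g); auto. Qed.
Lemma isd_poly2 (c0 c1 c2 : R) x : is_derive (fun t => c0 + c1 * t + c2 * t ^ 2) x (c1 + 2 * c2 * x).
Proof. auto_derive; auto; ring. Qed.

Lemma Derive_jacobiP k a b x : Derive (jacobiP k a b) x = JD k a b x.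
Proof. apply is_derive_unique, jacobiP_derive. Qed.

Definition Y2 (k : nat) (a b x : R) : R :=
  match k with O => 0 | S k' => (INR k' + a + b + 2) / 2 * JD k' (a + 1) (b + 1) x end.

Lemma JD_derive k a b x : is_derive (JD k a b) x (Y2 k a b x).
Proof.
  destruct k as [|k'].
  - apply (is_derive_ext (fun _ => 0)).
    + intros t. unfold JD, dT. simpl. field.
    + simpl. apply is_derive_Reals, (derivable_pt_lim_const 0).
  - apply (is_derive_ext (fun t => (INR k' + a + b + 2) / 2 * jacobiP k' (a + 1) (b + 1) t)).
    { intros t. symmetry. apply JD_S. }
    simpl Y2. replace ((INR k' + a + b + 2) / 2 * JD k' (a + 1) (b + 1) x) with
      (0 * jacobiP k' (a + 1) (b + 1) x + (INR k' + a + b + 2) / 2 * JD k' (a + 1) (b + 1) x) by ring.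
    apply (isd_mult (fun _ => (INR k' + a + b + 2) / 2) (jacobiP k' (a + 1) (b + 1))).
    + apply is_derive_Reals, derivable_pt_lim_const.
    + apply jacobiP_derive.
Qed.

Lemma ODE k a b x : (1 <= k)%nat ->
  (1 - x ^ 2) * Y2 k a b x + ((b - a) - (a + b + 2) * x) * JD k a b x
  + INR k * (INR k + a + b + 1) * jacobiP k a b x = 0.
Proof.
  intros Hk. destruct k as [|k']; [lia|]. simpl Y2. rewrite JD_S.
  assert (H := jacobi_D2 k' a b x). unfold JD.
  transitivity ((INR k' + a + b + 2) / 2 * ((1 - x ^ 2) * dT k' (JA k' (a + 1) (b + 1)) x +
    (b - a - (a + b + 2) * x) * jacobiP k' (a + 1) (b + 1) x) + INR (S k') * (INR (S k') + a + b + 1) * jacobiP (S k') a b x).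
  { ring. }
  rewrite H. rewrite S_INR. field.
Qed.

Lemma Cont_Y2 k a b : Cont (Y2 k a b).
Proof.
  destruct k; simpl.
  - apply Cont_const.
  - apply Cont_mult; [apply Cont_const|apply Cont_JD].
Qed.

Lemma Cont_opp f : Cont f -> Cont (fun x => - f x).
Proof. intros H x. apply (continuous_opp f); auto. Qed.
Lemma Cont_minus f g : Cont f -> Cont g -> Cont (fun x => f x - g x).
Proof. intros. unfold Rminus. apply Cont_plus; auto. apply Cont_opp; auto. Qed.

Lemma Cont_powf f n : Cont f -> Cont (fun x => f x ^ n).
Proof.
  intros H. induction n; simpl.
  - apply Cont_const.
  - apply Cont_mult; auto.
Qed.

Ltac solve_cont3 := match goal with
 | |- Cont (fun x => @?f x + @?g x) => apply (Cont_plus f g); solve_cont3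
 | |- Cont (fun x => @?f x - @?g x) => apply (Cont_minus f g); solve_cont3
 | |- Cont (fun x => @?f x * @?g x) => apply (Cont_mult f g); solve_cont3
 | |- Cont (fun x => - @?f x) => apply (Cont_opp f); solve_cont3
 | |- Cont (fun x => x ^ _) => apply Cont_pow
 | |- Cont (fun x => @?f x ^ ?n) => apply (Cont_powf f n); solve_cont3
 | |- Cont (fun x => x) => apply Cont_id
 | |- Cont (fun x => ?c) => apply Cont_const
 | |- Cont (fun x => ?f x) => assumption
 | |- Cont ?f => assumption
 | |- _ => idtac
end.

Definition tau a b x := (b - a) - (a + b + 2) * x.
Definition ell a b x := (b - a) + (2 - (a + b)) * x.
Definition QQ k a b x :=
  let s := a + b in let r := 2 * INR k + s in
  (r ^ 2 - s ^ 2 + 4 * (INR k * (INR k + s + 1))) * (1 - x ^ 2)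
  - 2 * (tau a b x * ell a b x + (1 - x ^ 2) * (2 - s)).

Lemma reduce_gen k a b (y y1 y2 : R -> R) : 0 < a -> 0 < b ->
  (forall x, is_derive y x (y1 x)) -> (forall x, is_derive y1 x (y2 x)) ->
  Cont y -> Cont y1 -> Cont y2 ->
  (forall x, (1 - x ^ 2) * y2 x + ((b - a) - (a + b + 2) * x) * y1 x
     + INR k * (INR k + a + b + 1) * y x = 0) ->
  L a b (fun x => (1 - x ^ 2) * ((rho_ k a b ^ 2 - sigma_ a b ^ 2) * y x ^ 2
     - 4 * (eta_ a b + sigma_ a b * x) * y x * y1 x + 4 * (1 - x ^ 2) * y1 x ^ 2))
  = L a b (fun x => y x ^ 2 * QQ k a b x).
Proof.
  intros Ha Hb Dy Dy1 Cy Cy1 Cy2 Hode.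
  set (p1 := fun x => (1 - x ^ 2) * (y x * y1 x)).
  set (dp1 := fun x => (-2 * x) * (y x * y1 x) + (1 - x ^ 2) * (y1 x * y1 x + y x * y2 x)).
  set (p2 := fun x => ell a b x * (y x * y x)).
  set (dp2 := fun x => (2 - (a + b)) * (y x * y x) + ell a b x * (y1 x * y x + y x * y1 x)).
  assert (H1 := L_pearson a b p1 dp1 Ha Hb).
  assert (H2 := L_pearson a b p2 dp2 Ha Hb).
  assert (Dyy1 : forall x, is_derive (fun t => y t * y1 t) x (y1 x * y1 x + y x * y2 x)) by (intros; apply isd_mult; auto).
  assert (Dyy : forall x, is_derive (fun t => y t * y t) x (y1 x * y x + y x * y1 x)) by (intros; apply isd_mult; auto).
  specialize (H1 ltac:(intros x; unfold p1, dp1; apply (isd_mult (fun t => 1 - t ^ 2) (fun t => y t * y1 t)); auto;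
                        auto_derive; auto; ring)).
  specialize (H1 ltac:(unfold dp1; solve_cont3)).
  specialize (H2 ltac:(intros x; unfold p2, dp2; apply (isd_mult (fun t => ell a b t) (fun t => y t * y t)); auto;
                        unfold ell; auto_derive; auto; ring)).
  specialize (H2 ltac:(unfold dp2, ell; solve_cont3)).
  set (I1 := fun x => ((b - a) - (a + b + 2) * x) * p1 x + (1 - x ^ 2) * dp1 x).
  set (I2 := fun x => ((b - a) - (a + b + 2) * x) * p2 x + (1 - x ^ 2) * dp2 x).
  fold I1 in H1. fold I2 in H2.
  assert (CI1 : Cont I1) by (unfold I1, p1, dp1; solve_cont3).
  assert (CI2 : Cont I2) by (unfold I2, p2, dp2, ell; solve_cont3).
  assert (CQ : Cont (fun x => y x ^ 2 * QQ k a b x)) by (unfold QQ, tau, ell; cbv zeta; solve_cont3).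
  assert (E : forall x, (1 - x ^ 2) * ((rho_ k a b ^ 2 - sigma_ a b ^ 2) * y x ^ 2
     - 4 * (eta_ a b + sigma_ a b * x) * y x * y1 x + 4 * (1 - x ^ 2) * y1 x ^ 2)
     = 4 * I1 x + (2 * I2 x + y x ^ 2 * QQ k a b x)).
  { intros x. assert (O := Hode x).
    unfold I1, I2, p1, p2, dp1, dp2, QQ, tau, ell, eta_, sigma_, rho_. cbv zeta.
    apply Rminus_diag_uniq.
    transitivity (-4 * (1 - x^2) * y x * ((1 - x ^ 2) * y2 x + ((b - a) - (a + b + 2) * x) * y1 x + INR k * (INR k + a + b + 1) * y x)).
    - ring.
    - rewrite O. ring. }
  rewrite (L_ext _ _ _ _ (fun x _ => E x)).
  assert (C2 : Cont (fun x => 2 * I2 x)) by solve_cont3.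
  assert (C3 : Cont (fun x => 2 * I2 x + y x ^ 2 * QQ k a b x)) by (apply Cont_plus; auto).
  rewrite L_plus by (auto || solve_cont3).
  rewrite L_scal by auto.
  rewrite L_plus by auto.
  rewrite L_scal by auto.
  rewrite H1, H2. ring.
Qed.

Lemma reduce k a b : (1 <= k)%nat -> 0 < a -> 0 < b ->
  L a b (fun x => (1 - x ^ 2) * W k a b x) = L a b (fun x => jacobiP k a b x ^ 2 * QQ k a b x).
Proof.
  intros Hk Ha Hb.
  rewrite <- (reduce_gen k a b (jacobiP k a b) (JD k a b) (Y2 k a b)); auto.
  - apply L_ext. intros x _. unfold W. cbv zeta. rewrite Derive_jacobiP. reflexivity.
  - apply jacobiP_derive.
  - apply JD_derive.
  - apply Cont_jacobiP.
  - apply Cont_JD.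
  - apply Cont_Y2.
  - intros x. apply ODE; auto.
Qed.

Lemma monc_0 k : monc k k = / 2 ^ k.
Proof.
  unfold monc. rewrite Nat.sub_diag. simpl (Factorial.fact 0). simpl INR.
  assert (INR (Factorial.fact k) <> 0) by apply INR_fact_neq_0.
  field. split; auto. apply pow_nonzero; lra.
Qed.
Lemma monc_1 k : monc k (S k) = (INR k + 1) / 2 ^ k.
Proof.
  unfold monc. replace (S k - k)%nat with 1%nat by lia. rewrite fact_simpl, mult_INR, S_INR.
  simpl (Factorial.fact 1). simpl INR.
  assert (INR (Factorial.fact k) <> 0) by apply INR_fact_neq_0.
  field. split; auto. apply pow_nonzero; lra.
Qed.
Lemma monc_2 k : monc k (S (S k)) = (INR k + 1) * (INR k + 2) / (2 * 2 ^ k).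
Proof.
  unfold monc. replace (S (S k) - k)%nat with 2%nat by lia. rewrite !fact_simpl, !mult_INR, !S_INR.
  simpl (Factorial.fact 2). simpl INR.
  assert (INR (Factorial.fact k) <> 0) by apply INR_fact_neq_0.
  field. split; auto. apply pow_nonzero; lra.
Qed.

Definition Mv k a b j := L a b (fun x => jacobiP k a b x * x ^ j).
Definition M0 a b := L a b (fun _ => 1).

Lemma Mv_low k a b j : 0 < a -> 0 < b -> (j < k)%nat -> Mv k a b j = 0.
Proof.
  intros Ha Hb Hj. unfold Mv. rewrite Mon by auto.
  replace (j <? k)%nat with true by (symmetry; apply Nat.ltb_lt; auto). reflexivity.
Qed.

Lemma Mv_k k a b : 0 < a -> 0 < b -> Mv k a b k = M0 (a + INR k) (b + INR k) / 2 ^ k.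
Proof.
  intros Ha Hb. unfold Mv. rewrite Mon by auto.
  replace (k <? k)%nat with false by (symmetry; apply Nat.ltb_ge; lia).
  rewrite monc_0, Nat.sub_diag. unfold M0. simpl pow. unfold Rdiv. ring.
Qed.

Lemma Mv_k1 k a b : 0 < a -> 0 < b ->
  Mv k a b (S k) = (INR k + 1) / 2 ^ k * ((b - a) / (a + b + 2 * INR k + 2)) * M0 (a + INR k) (b + INR k).
Proof.
  intros Ha Hb. unfold Mv. rewrite Mon by auto.
  replace (S k <? k)%nat with false by (symmetry; apply Nat.ltb_ge; lia).
  rewrite monc_1. replace (S k - k)%nat with 1%nat by lia.
  assert (0 <= INR k) by apply pos_INR.
  rewrite (L_ext _ _ _ (fun x => x)) by (intros; simpl; ring).
  rewrite mom1 by lra. unfold M0.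
  replace (b + INR k - (a + INR k)) with (b - a) by ring.
  replace (a + INR k + (b + INR k) + 2) with (a + b + 2 * INR k + 2) by ring. ring.
Qed.

Lemma Mv_k2 k a b : 0 < a -> 0 < b ->
  Mv k a b (S (S k)) = (INR k + 1) * (INR k + 2) / (2 * 2 ^ k) *
    (((b - a) * ((b - a) / (a + b + 2 * INR k + 2)) + 1) / (a + b + 2 * INR k + 3)) * M0 (a + INR k) (b + INR k).
Proof.
  intros Ha Hb. unfold Mv. rewrite Mon by auto.
  replace (S (S k) <? k)%nat with false by (symmetry; apply Nat.ltb_ge; lia).
  rewrite monc_2. replace (S (S k) - k)%nat with 2%nat by lia.
  assert (0 <= INR k) by apply pos_INR.
  rewrite mom2, mom1 by lra. unfold M0.
  replace (b + INR k - (a + INR k)) with (b - a) by ring.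
  replace (a + INR k + (b + INR k) + 2) with (a + b + 2 * INR k + 2) by ring.
  replace (a + INR k + (b + INR k) + 3) with (a + b + 2 * INR k + 3) by ring.
  field. repeat split; try lra. apply pow_nonzero; lra.
Qed.

Definition q0 k a b := let s := a + b in let r := 2 * INR k + s in
  (r ^ 2 - s ^ 2 + 4 * (INR k * (INR k + s + 1))) - 2 * ((b - a) * (b - a)) - 2 * (2 - s).
Definition q1 (k : nat) a b := let s := a + b in - 2 * ((b - a) * (2 - s) + (- (s + 2)) * (b - a)).
Definition q2 k a b := let s := a + b in let r := 2 * INR k + s in
  - (r ^ 2 - s ^ 2 + 4 * (INR k * (INR k + s + 1))) - 2 * ((- (s + 2)) * (2 - s)) + 2 * (2 - s).

Lemma QQ_poly k a b x : QQ k a b x = q0 k a b + q1 k a b * x + q2 k a b * x ^ 2.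
Proof. unfold QQ, q0, q1, q2, tau, ell. cbv zeta. ring. Qed.

Definition GG k a b i := pc k a b i * (q0 k a b * Mv k a b i + q1 k a b * Mv k a b (S i) + q2 k a b * Mv k a b (S (S i))).

Lemma LQ k a b : 0 < a -> 0 < b ->
  L a b (fun x => jacobiP k a b x ^ 2 * QQ k a b x) = sum_f_R0 (GG k a b) k.
Proof.
  intros Ha Hb.
  set (y := jacobiP k a b).
  rewrite (L_ext _ _ _ (fun x => sum_f_R0 (fun i => pc k a b i *
     (q0 k a b * (y x * x ^ i) + q1 k a b * (y x * x ^ (S i)) + q2 k a b * (y x * x ^ (S (S i))))) k)).
  2:{ intros x _. rewrite QQ_poly. unfold y. simpl pow. rewrite Rmult_1_r.
      rewrite (Rep k a b x) at 2.
      rewrite <- (sum_scal_l (jacobiP k a b x)).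
      rewrite Rmult_comm. rewrite <- sum_scal_l. apply sum_eq. intros. simpl pow. ring. }
  assert (Cy : Cont y) by apply Cont_jacobiP.
  rewrite L_sum by (auto; intros m; solve_cont3).
  apply sum_eq. intros i _. unfold GG, Mv. fold y.
  rewrite L_scal by (auto; solve_cont3).
  rewrite L_plus by (auto; solve_cont3).
  rewrite L_plus by (auto; solve_cont3).
  rewrite !L_scal by (auto; solve_cont3).
  reflexivity.
Qed.

Lemma sum_last (G : nat -> R) m : (forall i, (i < m)%nat -> G i = 0) -> sum_f_R0 G m = G m.
Proof.
  intros H. destruct m as [|m]; [reflexivity|].
  rewrite tech5. replace (sum_f_R0 G m) with 0; [ring|].
  symmetry. clear - H. induction m.
  - simpl. apply H; lia.
  - rewrite tech5, IHm; [rewrite H; [ring|lia]|]. intros; apply H; lia.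
Qed.

Theorem alg_final k a b : (1 <= k)%nat -> 0 < a -> 0 < b ->
  RInt (fun x => rpow (1 - x) (a + 1) * rpow (1 + x) (b + 1) * W k a b x) (-1) 1
  = (rho_ k a b ^ 2 - eta_ a b ^ 2) * (rho_ k a b ^ 2 - sigma_ a b ^ 2)
    / (rho_ k a b * (rho_ k a b - 1)) * (pc k a b k * M0 (a + INR k) (b + INR k) / 2 ^ k).
Proof.
  intros Hk Ha Hb. match goal with |- ?A = ?B => change (@eq R A B) end.
  change (RInt (fun x => rpow (1 - x) (a + 1) * rpow (1 + x) (b + 1) * W k a b x) (-1) 1)
    with (L (a + 1) (b + 1) (W k a b)).
  rewrite <- L_shift, reduce, LQ by auto.
  assert (P2k : 2 ^ k <> 0) by (apply pow_nonzero; lra).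
  destruct k as [|k]; [lia|].
  destruct k as [|m].
  - simpl sum_f_R0. unfold GG.
    rewrite (Mv_low 1 a b 0) by (auto; lia).
    rewrite (Mv_k 1 a b), (Mv_k1 1 a b), (Mv_k2 1 a b) by auto.
    rewrite (pc_d 0 a b) by auto.
    unfold q0, q1, q2, rho_, eta_, sigma_. cbv zeta.
    simpl INR. simpl INR in P2k.
    field. repeat split; try lra; auto.
  - rewrite !tech5. rewrite sum_last.
    2:{ intros i Hi. unfold GG. rewrite !Mv_low by (auto; lia). ring. }
    unfold GG.
    rewrite (Mv_low (S (S m)) a b m), (Mv_low (S (S m)) a b (S m)) by (auto; lia).
    rewrite (Mv_k (S (S m)) a b), (Mv_k1 (S (S m)) a b), (Mv_k2 (S (S m)) a b) by auto.
    rewrite (pc_d (S m) a b), (pc_e m a b) by auto.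
    cbv zeta.
    assert (HK : INR (S (S m)) >= 2) by (rewrite !S_INR; generalize (pos_INR m); lra).
    set (K := INR (S (S m))) in *.
    unfold q0, q1, q2, rho_, eta_, sigma_. cbv zeta. fold K.
    field. repeat split; try lra; auto.
Qed.

Definition Be p q : R := RInt (fun t => rpow t p * rpow (1 - t) q) 0 1.

Lemma rpow_1_base s : rpow 1 s = 1.
Proof. rewrite rpow_pos by lra. unfold Rpower. rewrite ln_1, Rmult_0_r. apply exp_0. Qed.

Lemma cont_rpow_id s (x : R) : 0 < s -> continuous (fun y => rpow y s) x.
Proof. apply rpow_cont. Qed.

Ltac req := match goal with |- ?A = ?B => change (@eq R A B) end.

Lemma RInt_ext_R (f g : R -> R) a b : a <= b -> (forall x, a < x < b -> f x = g x) -> RInt f a b = RInt g a b.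
Proof.
  intros Hab H. apply RInt_ext. intros x Hx. rewrite Rmin_left in Hx by lra. rewrite Rmax_right in Hx by lra. auto.
Qed.

Lemma Be_ex p q : 0 < p -> 0 < q -> ex_RInt (fun t => rpow t p * rpow (1 - t) q) 0 1.
Proof.
  intros. apply (ex_RInt_continuous (V:=R_CompleteNormedModule)). intros.
  apply cont_mult; [apply rpow_cont; auto|apply cont_rpow_1m; auto].
Qed.

Lemma RInt_minus_R (f g : R -> R) a b : ex_RInt f a b -> ex_RInt g a b ->
  RInt (fun x => f x - g x) a b = RInt f a b - RInt g a b.
Proof. intros; apply (RInt_minus (V:=R_CompleteNormedModule)); auto. Qed.

Lemma Be_split p q : 0 < p -> 0 < q -> Be p q = Be (p + 1) q + Be p (q + 1).
Proof.
  intros Hp Hq. unfold Be. rewrite <- RInt_plus_R by (apply Be_ex; lra).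
  apply RInt_ext_R; [lra|]. intros x Hx.
  rewrite !rpow_S by lra. ring.
Qed.

Lemma Be_ibp p q : 0 < p -> 0 < q -> (p + 1) * Be p (q + 1) = (q + 1) * Be (p + 1) q.
Proof.
  intros Hp Hq.
  set (G := fun t => rpow t (p + 1) * rpow (1 - t) (q + 1)).
  set (g := fun t => (p + 1) * rpow t p * rpow (1 - t) (q + 1) - (q + 1) * rpow t (p + 1) * rpow (1 - t) q).
  assert (Hd : forall t, is_derive G t (g t)).
  { intros t. unfold G, g.
    assert (H1 : is_derive (fun y => rpow (1 - y) (q + 1)) t (- (q + 1) * rpow (1 - t) q)).
    { replace (- (q + 1) * rpow (1 - t) q) with (scal (-1) ((q + 1) * rpow (1 - t) (q + 1 - 1))).
      2:{ unfold scal; simpl; unfold mult; simpl. replace (q + 1 - 1) with q by ring. ring. }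
      apply (is_derive_comp (fun s => rpow s (q + 1)) (fun y => 1 - y)).
      - apply rpow_derive; lra.
      - auto_derive; auto; ring. }
    assert (H2 : is_derive (fun y => rpow y (p + 1)) t ((p + 1) * rpow t p)).
    { replace ((p + 1) * rpow t p) with ((p + 1) * rpow t (p + 1 - 1)) by (f_equal; f_equal; ring).
      apply rpow_derive; lra. }
    replace ((p + 1) * rpow t p * rpow (1 - t) (q + 1) - (q + 1) * rpow t (p + 1) * rpow (1 - t) q)
      with ((p + 1) * rpow t p * rpow (1 - t) (q + 1) + rpow t (p + 1) * (- (q + 1) * rpow (1 - t) q)) by ring.
    apply (isd_mult (fun y => rpow y (p + 1)) (fun y => rpow (1 - y) (q + 1))); auto. }
  assert (Hc : forall t, continuous g t).
  { intros t. unfold g.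
    apply (Cont_minus (fun t => (p + 1) * rpow t p * rpow (1 - t) (q + 1)) (fun t => (q + 1) * rpow t (p + 1) * rpow (1 - t) q));
    intros y; repeat apply cont_mult; try apply continuous_const; try apply rpow_cont; try apply cont_rpow_1m; lra. }
  assert (HI := is_RInt_derive G g 0 1 (fun x _ => Hd x) (fun x _ => Hc x)).
  assert (HG1 : G 1 = 0) by (unfold G; rewrite (rpow_nonpos (1 - 1)) by lra; ring).
  assert (HG0 : G 0 = 0) by (unfold G; rewrite (rpow_nonpos 0) by lra; ring).
  rewrite HG1, HG0 in HI. unfold minus, plus, opp in HI; simpl in HI.
  replace (0 + - 0) with 0 in HI by ring.
  apply is_RInt_unique in HI.
  unfold g in HI. rewrite RInt_minus_R in HI.
  2:{ apply (ex_RInt_continuous (V:=R_CompleteNormedModule)); intros;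
      repeat apply cont_mult; try apply continuous_const; try apply rpow_cont; try apply cont_rpow_1m; lra. }
  2:{ apply (ex_RInt_continuous (V:=R_CompleteNormedModule)); intros;
      repeat apply cont_mult; try apply continuous_const; try apply rpow_cont; try apply cont_rpow_1m; lra. }
  rewrite (RInt_ext (fun t => (p + 1) * rpow t p * rpow (1 - t) (q + 1)) (fun t => (p + 1) * (rpow t p * rpow (1 - t) (q + 1)))) in HI by (intros; simpl; ring).
  rewrite (RInt_ext (fun t => (q + 1) * rpow t (p + 1) * rpow (1 - t) q) (fun t => (q + 1) * (rpow t (p + 1) * rpow (1 - t) q))) in HI by (intros; simpl; ring).
  rewrite !RInt_scal_R in HI by (apply Be_ex; lra).
  unfold Be. lra.
Qed.

Lemma Be_rec2 p q : 0 < p -> 0 < q -> Be p (q + 1) = (q + 1) / (p + q + 2) * Be p q.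
Proof.
  intros Hp Hq. req. rewrite (Be_split p q) by auto.
  assert (H := Be_ibp p q Hp Hq). field_simplify_eq; [|lra]. nra.
Qed.

Lemma Be_rec1 p q : 0 < p -> 0 < q -> Be (p + 1) q = (p + 1) / (p + q + 2) * Be p q.
Proof.
  intros Hp Hq. req. rewrite (Be_split p q) by auto.
  assert (H := Be_ibp p q Hp Hq). field_simplify_eq; [|lra]. nra.
Qed.

Lemma RInt_rpow s : 0 < s -> RInt (fun t => rpow t s) 0 1 = / (s + 1).
Proof.
  intros Hs.
  assert (HI := is_RInt_derive (fun t => rpow t (s + 1) / (s + 1)) (fun t => rpow t s) 0 1).
  assert (H : is_RInt (fun t => rpow t s) 0 1 (/ (s + 1))).
  { replace (/ (s + 1)) with (minus (rpow 1 (s + 1) / (s + 1)) (rpow 0 (s + 1) / (s + 1))).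
    - apply HI.
      + intros x _. replace (rpow x s) with ((s + 1) * rpow x (s + 1 - 1) / (s + 1)).
        2:{ replace (s + 1 - 1) with s by ring. field. lra. }
        apply (is_derive_ext (fun t => rpow t (s + 1) * / (s + 1))); [intros; simpl; unfold Rdiv; ring|].
        unfold Rdiv. replace ((s + 1) * rpow x (s + 1 - 1) * / (s + 1)) with
          ((s + 1) * rpow x (s + 1 - 1) * / (s + 1) + rpow x (s + 1) * 0) by ring.
        apply (isd_mult (fun t => rpow t (s + 1)) (fun _ => / (s + 1))).
        * apply rpow_derive; lra.
        * apply is_derive_Reals, derivable_pt_lim_const.
      + intros; apply rpow_cont; auto.
    - rewrite rpow_1_base, (rpow_nonpos 0) by lra. unfold minus, plus, opp; simpl. field. lra. }
  exact (is_RInt_unique (V:=R_CompleteNormedModule) _ _ _ _ H).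
Qed.

Lemma Be_1 s : 0 < s -> Be s 1 = / ((s + 1) * (s + 2)).
Proof.
  intros Hs. unfold Be.
  rewrite (RInt_ext_R _ (fun t => rpow t s - rpow t (s + 1))).
  2:{ lra. }
  2:{ intros x Hx. rewrite rpow_1, rpow_S by lra. ring. }
  rewrite RInt_minus_R.
  - rewrite !RInt_rpow by lra. field. lra.
  - apply (ex_RInt_continuous (V:=R_CompleteNormedModule)); intros; apply rpow_cont; lra.
  - apply (ex_RInt_continuous (V:=R_CompleteNormedModule)); intros; apply rpow_cont; lra.
Qed.


Lemma exp_le x y : x <= y -> exp x <= exp y.
Proof. intros H. destruct (Rle_lt_or_eq_dec x y H) as [H1|H1]; [left; apply exp_increasing; auto|rewrite H1; lra]. Qed.

Lemma rpow_le_exp y q1 q2 : 0 <= y <= 1 -> q1 <= q2 -> rpow y q2 <= rpow y q1.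
Proof.
  intros Hy Hq. destruct (Req_dec y 0) as [->|Hy0].
  - rewrite !(rpow_nonpos 0) by lra. lra.
  - rewrite !rpow_pos by lra. unfold Rpower. apply exp_le.
    assert (ln y <= 0).
    { destruct (Req_dec y 1) as [->|Hy1]; [rewrite ln_1; lra|].
      left. rewrite <- ln_1. apply ln_increasing; lra. }
    nra.
Qed.

Lemma Be_mono p q1 q2 : 0 < p -> 0 < q1 -> q1 <= q2 -> Be p q2 <= Be p q1.
Proof.
  intros Hp Hq1 Hq. unfold Be. apply RInt_le; try lra; try (apply Be_ex; lra).
  intros x Hx. apply Rmult_le_compat_l; [apply rpow_ge0|]. apply rpow_le_exp; lra.
Qed.

Lemma Be_pos p q : 0 < p -> 0 < q -> 0 < Be p q.
Proof.
  intros Hp Hq. unfold Be. apply RInt_gt_0; [lra| |].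
  - intros x Hx. apply Rmult_lt_0_compat; apply rpow_gt0; lra.
  - intros; apply cont_mult; [apply rpow_cont; auto|apply cont_rpow_1m; auto].
Qed.

Lemma M0_Be a b : 0 < a -> 0 < b -> M0 a b = Rpower 2 (a + b + 1) * Be b a.
Proof.
  intros Ha Hb. unfold M0, L, Be.
  assert (Hex : ex_RInt (fun x => wt a b x * 1) (2 * 0 + -1) (2 * 1 + -1)).
  { replace (2 * 0 + -1) with (-1) by ring. replace (2 * 1 + -1) with 1 by ring.
    apply L_ex; auto. apply Cont_const. }
  assert (H := RInt_comp_lin (V:=R_CompleteNormedModule) (fun x => wt a b x * 1) 2 (-1) 0 1 Hex).
  replace (2 * 0 + -1) with (-1) in H by ring. replace (2 * 1 + -1) with 1 in H by ring.
  rewrite <- H. rewrite <- RInt_scal_R by (apply Be_ex; lra).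
  apply RInt_ext_R; [lra|]. intros x Hx. unfold scal; simpl; unfold mult; simpl. unfold wt.
  replace (1 - (2 * x + -1)) with (2 * (1 - x)) by ring.
  replace (1 + (2 * x + -1)) with (2 * x) by ring.
  rewrite !rpow_mult by lra. rewrite !(rpow_pos 2) by lra.
  rewrite !Rpower_plus, Rpower_1 by lra. ring.
Qed.

Definition gf S t := rpow t (S - 1) * exp (- t).
Definition FG S T : R := RInt (gf S) 0 T.

Lemma gf_cont S x : 1 < S -> continuous (gf S) x.
Proof.
  intros HS. unfold gf. apply cont_mult; [apply rpow_cont; lra|].
  apply cont_of_derive. auto_derive; auto.
Qed.

Lemma gf_ex S a b : 1 < S -> ex_RInt (gf S) a b.
Proof. intros. apply (ex_RInt_continuous (V:=R_CompleteNormedModule)). intros; apply gf_cont; auto. Qed.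

Lemma gf_ge0 S t : 0 <= gf S t.
Proof. unfold gf. apply Rmult_le_pos; [apply rpow_ge0|left; apply exp_pos]. Qed.

Lemma FG_chasles S u v : 1 < S -> FG S v = FG S u + RInt (gf S) u v.
Proof.
  intros HS. unfold FG. symmetry. apply (RInt_Chasles (V:=R_CompleteNormedModule)); apply gf_ex; auto.
Qed.

Lemma FG_mono S u v : 1 < S -> u <= v -> FG S u <= FG S v.
Proof.
  intros HS Huv. rewrite (FG_chasles S u v HS).
  assert (0 <= RInt (gf S) u v) by (apply RInt_ge_0; auto; [apply gf_ex; auto|intros; apply gf_ge0]).
  lra.
Qed.

Lemma FG_ge0 S T : 1 < S -> 0 <= T -> 0 <= FG S T.
Proof.
  intros HS HT. unfold FG. apply RInt_ge_0; auto; [apply gf_ex; auto|intros; apply gf_ge0].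
Qed.

Lemma gf_le1 S t : 1 < S -> 0 <= t <= 1 -> gf S t <= 1.
Proof.
  intros HS Ht. unfold gf.
  assert (rpow t (S - 1) <= 1).
  { destruct (Req_dec t 0) as [->|Ht0]; [rewrite rpow_nonpos by lra; lra|].
    apply (Rle_trans _ (rpow t 0)); [apply rpow_le_exp; lra|].
    rewrite rpow_pos by lra. rewrite Rpower_O by lra. lra. }
  assert (exp (- t) <= 1) by (rewrite <- exp_0; apply exp_le; lra).
  assert (0 <= rpow t (S - 1)) by apply rpow_ge0.
  assert (0 < exp (- t)) by apply exp_pos. nra.
Qed.

Lemma FG_small S u : 1 < S -> 0 <= u <= 1 -> FG S u <= u.
Proof.
  intros HS Hu. unfold FG.
  assert (H := RInt_le (gf S) (fun _ => 1) 0 u ltac:(lra) (gf_ex S 0 u HS)).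
  rewrite RInt_const in H. unfold scal in H; simpl in H; unfold mult in H; simpl in H.
  replace u with ((u - 0) * 1) at 2 by ring. apply H.
  - apply ex_RInt_const.
  - intros; apply gf_le1; lra.
Qed.


Lemma pow_le_exp N t : 0 <= t -> t ^ N <= INR (Factorial.fact N) * 2 ^ N * exp (t / 2).
Proof.
  intros Ht.
  assert (H := exp_ge_taylor (t / 2) N ltac:(lra)).
  assert (H2 : (t / 2) ^ N / INR (Factorial.fact N) <= sum_f_R0 (fun k => (t / 2) ^ k / INR (Factorial.fact k)) N).
  { destruct N; simpl; [lra|].
    assert (0 <= sum_f_R0 (fun k => (t / 2) ^ k / INR (Factorial.fact k)) N).
    { apply cond_pos_sum. intros. apply Rmult_le_pos; [apply pow_le; lra|left; apply Rinv_0_lt_compat, INR_fact_lt_0]. }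
    lra. }
  assert (HF : 0 < INR (Factorial.fact N)) by apply INR_fact_lt_0.
  assert (HP : 0 < 2 ^ N) by (apply pow_lt; lra).
  assert (E : (t / 2) ^ N = t ^ N / 2 ^ N) by (unfold Rdiv; rewrite Rpow_mult_distr, pow_inv; reflexivity).
  rewrite E in H2.
  assert (H3 : t ^ N / 2 ^ N / INR (Factorial.fact N) <= exp (t / 2)) by lra.
  apply (Rmult_le_compat_l (INR (Factorial.fact N) * 2 ^ N)) in H3; [|nra].
  replace (INR (Factorial.fact N) * 2 ^ N * (t ^ N / 2 ^ N / INR (Factorial.fact N))) with (t ^ N) in H3
    by (field; lra).
  exact H3.
Qed.

Lemma gf_bound S : 1 < S -> exists C, 0 < C /\ forall t, 0 <= t -> gf S t <= C * exp (- t / 2).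
Proof.
  intros HS. destruct (nfloor_ex S ltac:(lra)) as [N [HN1 HN2]].
  set (C := 1 + INR (Factorial.fact N) * 2 ^ N).
  assert (HF : 0 < INR (Factorial.fact N)) by apply INR_fact_lt_0.
  assert (HP : 0 < 2 ^ N) by (apply pow_lt; lra).
  exists C. split; [unfold C; nra|]. intros t Ht.
  assert (R1 : rpow t (S - 1) <= 1 + t ^ N).
  { destruct (Rle_lt_dec t 1) as [Ht1|Ht1].
    - assert (rpow t (S - 1) <= 1).
      { destruct (Req_dec t 0) as [->|Ht0]; [rewrite rpow_nonpos by lra; lra|].
        apply (Rle_trans _ (rpow t 0)); [apply rpow_le_exp; lra|].
        rewrite rpow_pos by lra. rewrite Rpower_O by lra. lra. }
      assert (0 <= t ^ N) by (apply pow_le; lra). lra.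
    - rewrite rpow_pos by lra. rewrite <- Rpower_pow by lra.
      assert (Rpower t (S - 1) <= Rpower t (INR N)) by (apply Rle_Rpower; lra).
      lra. }
  assert (R2 := pow_le_exp N t Ht).
  unfold gf.
  assert (E1 : exp (t / 2) * exp (- t) = exp (- t / 2)) by (rewrite <- exp_plus; f_equal; field).
  assert (E2 : exp (- t) <= exp (- t / 2)) by (apply exp_le; lra).
  assert (0 < exp (- t)) by apply exp_pos.
  apply (Rle_trans _ ((1 + INR (Factorial.fact N) * 2 ^ N * exp (t / 2)) * exp (- t))).
  - apply Rmult_le_compat_r; lra.
  - unfold C. rewrite Rmult_plus_distr_r, Rmult_assoc, E1.
    assert (0 < exp (- t / 2)) by apply exp_pos. nra.
Qed.

Lemma int_exp_half T : 0 <= T -> RInt (fun t => exp (- t / 2)) 0 T <= 2.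
Proof.
  intros HT.
  assert (H : is_RInt (fun t => exp (- t / 2)) 0 T (minus (-2 * exp (- T / 2)) (-2 * exp (- 0 / 2)))).
  { apply (is_RInt_derive (fun t => -2 * exp (- t / 2))).
    - intros x _. auto_derive; auto. change (-2 * (- (1) * / 2 * exp (- x * / 2)) = exp (- x / 2)). unfold Rdiv. field.
    - intros x _. apply cont_of_derive. auto_derive; auto. }
  apply (is_RInt_unique (V:=R_CompleteNormedModule)) in H. rewrite H.
  unfold minus, plus, opp; simpl.
  assert (0 < exp (- T / 2)) by apply exp_pos.
  replace (- 0 / 2) with 0 by field. rewrite exp_0. lra.
Qed.

Lemma FG_bound S : 1 < S -> exists B, forall T, 0 <= T -> FG S T <= B.
Proof.
  intros HS. destruct (gf_bound S HS) as [C [HC H]].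
  exists (C * 2). intros T HT. unfold FG.
  apply (Rle_trans _ (RInt (fun t => C * exp (- t / 2)) 0 T)).
  - apply RInt_le; auto.
    + apply gf_ex; auto.
    + apply (ex_RInt_continuous (V:=R_CompleteNormedModule)). intros. apply cont_of_derive. auto_derive; auto.
    + intros; apply H; lra.
  - rewrite RInt_scal_R.
    + assert (H2 := int_exp_half T HT). nra.
    + apply (ex_RInt_continuous (V:=R_CompleteNormedModule)). intros. apply cont_of_derive. auto_derive; auto.
Qed.

Lemma Gamma_char S : 1 < S ->
  (forall T, 0 <= T -> FG S T <= Gamma S) /\
  (forall eps, 0 < eps -> exists T0, 0 <= T0 /\ forall T, T0 <= T -> Gamma S - eps < FG S T).
Proof.
  intros HS. destruct (FG_bound S HS) as [B HB].
  set (E := fun y => exists T, 0 <= T /\ y = FG S T).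
  destruct (completeness E) as [l [Hub Hlub]].
  { exists B. intros y [T [HT ->]]. apply HB; auto. }
  { exists (FG S 0). exists 0. split; [lra|reflexivity]. }
  assert (Hup : forall T, 0 <= T -> FG S T <= l) by (intros T HT; apply Hub; exists T; auto).
  assert (Happ : forall eps, 0 < eps -> exists T0, 0 <= T0 /\ l - eps < FG S T0).
  { intros eps Heps. apply NNPP. intros Hn.
    assert (l <= l - eps); [|lra].
    apply Hlub. intros y [T [HT ->]].
    destruct (Rle_lt_dec (FG S T) (l - eps)) as [h|h]; auto.
    exfalso; apply Hn; exists T; auto. }
  assert (Hgen : is_RInt_gen (V:=R_NormedModule) (gf S) (at_right 0) (Rbar_locally p_infty) l).
  { unfold is_RInt_gen.
    apply (filterlimi_lim_ext_loc (fun ab => RInt (gf S) (fst ab) (snd ab))).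
    - apply filter_forall. intros ab. apply (RInt_correct (V:=R_CompleteNormedModule)), gf_ex; auto.
    - apply filterlim_locally. intros eps.
      destruct (Happ (eps / 2)) as [T0 [HT0 HT0']]; [destruct eps; simpl; lra|].
      assert (Hd : 0 < Rmin 1 (eps / 2)) by (apply Rmin_pos; [lra|destruct eps; simpl; lra]).
      apply (Filter_prod _ _ _ (fun u => 0 < u < Rmin 1 (eps / 2)) (fun v => T0 < v)).
      + exists (mkposreal _ Hd). intros u Hu Hpos. simpl in Hu.
        unfold ball in Hu; simpl in Hu; unfold AbsRing_ball, abs, minus, plus, opp in Hu; simpl in Hu.
        rewrite Ropp_0, Rplus_0_r in Hu. split; auto. unfold Rabs in Hu; destruct (Rcase_abs u); lra.
      + exists T0. intros; auto.
      + intros u v [Hu1 Hu2] Hv. simpl.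
        unfold ball; simpl; unfold AbsRing_ball, abs, minus, plus, opp; simpl.
        assert (Hc := FG_chasles S u v HS).
        assert (h1 : FG S u <= u) by (apply FG_small; auto; split; [lra|]; apply (Rle_trans _ _ _ (Rlt_le _ _ Hu2)), Rmin_l).
        assert (h2 : 0 <= FG S u) by (apply FG_ge0; lra).
        assert (h3 : FG S T0 <= FG S v) by (apply FG_mono; lra).
        assert (h4 : FG S v <= l) by (apply Hup; lra).
        assert (h5 : u < eps / 2) by (apply (Rlt_le_trans _ _ _ Hu2), Rmin_r).
        unfold Rabs. destruct (Rcase_abs _); lra. }
  assert (HG : Gamma S = l).
  { unfold Gamma. apply (is_RInt_gen_unique (V:=R_CompleteNormedModule)). exact Hgen. }
  rewrite HG. split; auto.
  intros eps Heps. destruct (Happ eps Heps) as [T0 [HT0 H0]]. exists T0. split; auto.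
  intros T HT. assert (FG S T0 <= FG S T) by (apply FG_mono; auto). lra.
Qed.

Lemma exp_pow_n x n : exp x ^ n = exp (INR n * x).
Proof.
  induction n as [|n IH].
  - simpl. rewrite Rmult_0_l, exp_0. reflexivity.
  - rewrite <- tech_pow_Rmult, IH, <- exp_plus. f_equal. rewrite S_INR. ring.
Qed.

Lemma bernoulli x c : 0 <= x <= 1 -> 1 - INR c * x <= (1 - x) ^ c.
Proof.
  intros Hx. induction c as [|c IH].
  - simpl. lra.
  - rewrite <- tech_pow_Rmult, S_INR.
    assert (0 <= INR c) by apply pos_INR.
    apply (Rle_trans _ ((1 - x) * (1 - INR c * x))); [nra|].
    apply Rmult_le_compat_l; lra.
Qed.

Lemma one_minus_le_exp x : 1 - x <= exp (- x).
Proof. assert (H := exp_ineq1_le (- x)). lra. Qed.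

Lemma pow_upper x n : 0 <= x <= 1 -> (1 - x) ^ n <= exp (- (INR n * x)).
Proof.
  intros Hx. replace (- (INR n * x)) with (INR n * (- x)) by ring. rewrite <- exp_pow_n.
  apply pow_incr. split; [lra|apply one_minus_le_exp].
Qed.

Lemma pow_lower x n : 0 <= x <= 1 -> exp (- (INR n * x)) * (1 - INR n * x ^ 2) <= (1 - x) ^ n.
Proof.
  intros Hx.
  assert (H1 : exp (- x) * (1 - x ^ 2) <= 1 - x).
  { assert (h := exp_ineq1_le x).
    assert (E : exp (- x) * exp x = 1) by (rewrite <- exp_plus; replace (- x + x) with 0 by ring; apply exp_0).
    assert (0 < exp (- x)) by apply exp_pos.
    replace (1 - x ^ 2) with ((1 - x) * (1 + x)) by ring.
    assert (exp (- x) * (1 + x) <= 1) by nra.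
    nra. }
  assert (H2 : (exp (- x) * (1 - x ^ 2)) ^ n <= (1 - x) ^ n).
  { apply pow_incr. split; auto. apply Rmult_le_pos; [left; apply exp_pos|]. nra. }
  rewrite Rpow_mult_distr, exp_pow_n in H2.
  assert (H3 := bernoulli (x ^ 2) n ltac:(split; nra)).
  replace (- (INR n * x)) with (INR n * (- x)) by ring.
  assert (0 < exp (INR n * - x)) by apply exp_pos.
  apply (Rle_trans _ (exp (INR n * - x) * (1 - x ^ 2) ^ n)); [|auto].
  apply Rmult_le_compat_l; lra.
Qed.

Lemma core_ineq x n c : 0 <= x <= 1 ->
  exp (- (INR n * x)) * (1 - INR n * x ^ 2 - INR c * x) <= (1 - x) ^ (n + c).
Proof.
  intros Hx. rewrite pow_add.
  assert (A := pow_upper x n Hx). assert (B := pow_lower x n Hx). assert (C := bernoulli x c Hx).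
  assert (P : 0 <= (1 - x) ^ n) by (apply pow_le; lra).
  assert (0 <= INR c) by apply pos_INR.
  apply (Rle_trans _ ((1 - x) ^ n * (1 - INR c * x))); [|apply Rmult_le_compat_l; auto].
  assert (0 <= INR c * x) by nra.
  nra.
Qed.

Lemma inv_n_lim : is_lim_seq (fun n => / INR n) 0.
Proof. apply (is_lim_seq_inv INR p_infty). apply is_lim_seq_INR. discriminate. Qed.

Lemma FG_lim z : 1 < z -> is_lim_seq (fun n => FG z (INR n)) (Gamma z).
Proof.
  intros HS. destruct (Gamma_char z HS) as [H1 H2].
  apply is_lim_seq_spec. intros eps.
  destruct (H2 eps (cond_pos eps)) as [T0 [HT0 HT]].
  destruct (nfloor_ex T0 HT0) as [N [HN1 HN2]].
  exists (S N). intros n Hn.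
  assert (INR (S N) <= INR n) by (apply le_INR; lia). rewrite S_INR in H.
  assert (h1 := HT (INR n) ltac:(lra)). assert (h2 := H1 (INR n) ltac:(apply pos_INR)).
  unfold Rabs. destruct (Rcase_abs _); lra.
Qed.

Lemma Gamma_pos z : 1 < z -> 0 < Gamma z.
Proof.
  intros HS. destruct (Gamma_char z HS) as [H1 _].
  apply (Rlt_le_trans _ (FG z 1)); [|apply H1; lra].
  unfold FG. apply RInt_gt_0; [lra| |intros; apply gf_cont; auto].
  intros x Hx. unfold gf. apply Rmult_lt_0_compat; [apply rpow_gt0; lra|apply exp_pos].
Qed.

Lemma subst_Be n s N : 0 < INR n -> 0 < s -> 0 < N ->
  Rpower (INR n) (s + 1) * Be s N = RInt (fun u => rpow u s * rpow (1 - u / INR n) N) 0 (INR n).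
Proof.
  intros Hn Hs HN.
  set (f := fun t => rpow t s * rpow (1 - t) N).
  assert (Hex : ex_RInt f (/ INR n * 0 + 0) (/ INR n * INR n + 0)).
  { replace (/ INR n * 0 + 0) with 0 by ring. replace (/ INR n * INR n + 0) with 1 by (field; lra).
    apply Be_ex; auto. }
  assert (H := RInt_comp_lin (V:=R_CompleteNormedModule) f (/ INR n) 0 0 (INR n) Hex).
  replace (/ INR n * 0 + 0) with 0 in H by ring. replace (/ INR n * INR n + 0) with 1 in H by (field; lra).
  unfold Be. fold f. rewrite <- H.
  rewrite <- RInt_scal_R.
  2:{ apply (ex_RInt_continuous (V:=R_CompleteNormedModule)). intros. unfold scal; simpl; unfold mult; simpl.
      apply cont_mult; [apply continuous_const|]. unfold f.
      apply cont_mult.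
      - apply (continuous_comp (fun y => / INR n * y + 0) (fun t => rpow t s)); [apply cont_of_derive; auto_derive; auto|apply rpow_cont; auto].
      - apply (continuous_comp (fun y => / INR n * y + 0) (fun t => rpow (1 - t) N)); [apply cont_of_derive; auto_derive; auto|apply cont_rpow_1m; auto]. }
  apply RInt_ext_R; [lra|]. intros u Hu. unfold scal; simpl; unfold mult; simpl. unfold f.
  replace (/ INR n * u + 0) with (/ INR n * u) by ring.
  rewrite rpow_mult by (try left; try apply Rinv_0_lt_compat; lra).
  rewrite (rpow_pos (/ INR n)) by (apply Rinv_0_lt_compat; lra).
  replace (1 - / INR n * u) with (1 - u / INR n) by (field; lra).
  assert (E : Rpower (/ INR n) s = / Rpower (INR n) s).
  { unfold Rpower. rewrite ln_Rinv by lra. rewrite <- exp_Ropp. f_equal. ring. }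
  rewrite E. rewrite Rpower_plus, Rpower_1 by lra.
  assert (0 < Rpower (INR n) s) by (unfold Rpower; apply exp_pos).
  field. split; lra.
Qed.

Lemma gf_shift s u : 0 < u -> gf (s + 1) u = rpow u s * exp (- u).
Proof. intros. unfold gf. replace (s + 1 - 1) with s by ring. reflexivity. Qed.
Lemma gf_shift2 s u : 0 < u -> gf (s + 2) u = rpow u s * u * exp (- u).
Proof. intros. unfold gf. replace (s + 2 - 1) with (s + 1) by ring. rewrite rpow_S by lra. reflexivity. Qed.
Lemma gf_shift3 s u : 0 < u -> gf (s + 3) u = rpow u s * u ^ 2 * exp (- u).
Proof. intros. unfold gf. replace (s + 3 - 1) with (s + 1 + 1) by ring. rewrite !rpow_S by lra. simpl. ring. Qed.

Lemma DC s c : 0 < s ->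
  is_lim_seq (fun n => Rpower (INR n) (s + 1) * Be s (INR n + INR c)) (Gamma (s + 1)).
Proof.
  intros Hs.
  set (K := Gamma (s + 3) + INR c * Gamma (s + 2)).
  assert (Hc : 0 <= INR c) by apply pos_INR.
  destruct (Gamma_char (s + 3) ltac:(lra)) as [G3 _].
  destruct (Gamma_char (s + 2) ltac:(lra)) as [G2 _].
  apply (is_lim_seq_le_le_loc (fun n => FG (s + 1) (INR n) - K * / INR n) _ (fun n => FG (s + 1) (INR n))).
  2:{ replace (Finite (Gamma (s + 1))) with (Finite (Gamma (s + 1) - K * 0)) by (f_equal; ring).
      apply is_lim_seq_minus'; [apply FG_lim; lra|].
      apply (is_lim_seq_scal_l _ K 0), inv_n_lim. }
  2:{ apply FG_lim; lra. }
  exists 1%nat. intros n Hn.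
  assert (Hn' : 1 <= INR n) by (replace 1 with (INR 1) by reflexivity; apply le_INR; auto).
  rewrite subst_Be by lra.
  set (g := fun u => rpow u s * rpow (1 - u / INR n) (INR n + INR c)).
  assert (Cg : forall u, continuous g u).
  { intros u. unfold g. apply cont_mult; [apply rpow_cont; auto|].
    apply (continuous_comp (fun y => 1 - y / INR n) (fun t => rpow t (INR n + INR c)));
      [apply cont_of_derive; auto_derive; lra|apply rpow_cont; lra]. }
  assert (Eg : forall u, 0 < u < INR n -> g u = rpow u s * (1 - u / INR n) ^ (n + c)).
  { intros u Hu. unfold g. rewrite <- plus_INR, rpow_nat; auto.
    assert (u / INR n < 1) by (apply (Rmult_lt_reg_r (INR n)); [lra|]; field_simplify; lra). lra. }
  assert (Hx : forall u, 0 < u < INR n -> 0 <= u / INR n <= 1).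
  { intros u Hu. split; [apply Rdiv_le_0_compat; lra|].
    apply (Rmult_le_reg_r (INR n)); [lra|]. field_simplify; lra. }
  split.
  -
    apply (Rle_trans _ (RInt (fun u => gf (s + 1) u - (gf (s + 3) u + INR c * gf (s + 2) u) * / INR n) 0 (INR n))).
    + rewrite RInt_minus_R.
      2:{ apply gf_ex; lra. }
      2:{ apply (ex_RInt_continuous (V:=R_CompleteNormedModule)). intros.
          apply cont_mult; [|apply continuous_const]. apply cont_plus; [apply gf_cont; lra|].
          apply cont_mult; [apply continuous_const|apply gf_cont; lra]. }
      rewrite (RInt_ext_R (fun u => (gf (s + 3) u + INR c * gf (s + 2) u) * / INR n) (fun u => / INR n * (gf (s + 3) u + INR c * gf (s + 2) u))) by (lra || (intros; cbv beta; ring)).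
      rewrite RInt_scal_R.
      2:{ apply (ex_RInt_continuous (V:=R_CompleteNormedModule)). intros.
          apply cont_plus; [apply gf_cont; lra|].
          apply cont_mult; [apply continuous_const|apply gf_cont; lra]. }
      assert (e3 := gf_ex (s + 3) 0 (INR n) ltac:(lra)).
      assert (e2 := gf_ex (s + 2) 0 (INR n) ltac:(lra)).
      assert (e2' : ex_RInt (fun u => INR c * gf (s + 2) u) 0 (INR n)).
      { apply (ex_RInt_continuous (V:=R_CompleteNormedModule)). intros.
          apply cont_mult; [apply continuous_const|apply gf_cont; lra]. }
      rewrite (RInt_plus_R (gf (s + 3)) (fun u => INR c * gf (s + 2) u)) by assumption.
      rewrite (RInt_scal_R (gf (s + 2))) by assumption.
      fold (FG (s + 1) (INR n)) (FG (s + 3) (INR n)) (FG (s + 2) (INR n)).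
      assert (h3 := G3 (INR n) ltac:(lra)). assert (h2 := G2 (INR n) ltac:(lra)).
      assert (0 < / INR n) by (apply Rinv_0_lt_compat; lra).
      assert (hk : FG (s + 3) (INR n) + INR c * FG (s + 2) (INR n) <= K).
      { unfold K. apply Rplus_le_compat; auto. apply Rmult_le_compat_l; auto. }
      apply (Rmult_le_compat_l (/ INR n)) in hk; [|lra]. lra.
    + apply RInt_le; [lra| | |].
      * apply (ex_RInt_continuous (V:=R_CompleteNormedModule)). intros.
        apply (Cont_minus (gf (s + 1)) (fun u => (gf (s + 3) u + INR c * gf (s + 2) u) * / INR n)).
        -- intros y; apply gf_cont; lra.
        -- intros y. apply cont_mult; [|apply continuous_const]. apply cont_plus; [apply gf_cont; lra|].
           apply cont_mult; [apply continuous_const| apply gf_cont; lra].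
      * apply (ex_RInt_continuous (V:=R_CompleteNormedModule)). intros; apply Cg.
      * intros u Hu. rewrite Eg by auto. rewrite gf_shift, gf_shift2, gf_shift3 by lra.
        assert (C := core_ineq (u / INR n) n c (Hx u Hu)).
        replace (INR n * (u / INR n)) with u in C by (field; lra).
        assert (0 <= rpow u s) by apply rpow_ge0.
        apply (Rle_trans _ (rpow u s * (exp (- u) * (1 - INR n * (u / INR n) ^ 2 - INR c * (u / INR n))))).
        -- right. field. lra.
        -- apply Rmult_le_compat_l; auto.
  - apply RInt_le; [lra| | |].
    + apply (ex_RInt_continuous (V:=R_CompleteNormedModule)). intros; apply Cg.
    + apply gf_ex; lra.
    + intros u Hu. rewrite Eg by auto. rewrite gf_shift by lra.
      apply Rmult_le_compat_l; [apply rpow_ge0|].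
      rewrite pow_add.
      assert (h1 := pow_upper (u / INR n) n (Hx u Hu)).
      replace (INR n * (u / INR n)) with u in h1 by (field; lra).
      assert (h2 : (1 - u / INR n) ^ c <= 1).
      { apply (Rle_trans _ (1 ^ c)); [apply pow_incr; assert (h := Hx u Hu); lra|rewrite pow1; lra]. }
      assert (h3 : 0 <= (1 - u / INR n) ^ n) by (apply pow_le; assert (h := Hx u Hu); lra).
      apply (Rmult_le_compat_l _ _ _ h3) in h2. lra.
Qed.

Lemma ratio_lim al be : 0 <= al -> 0 < be ->
  is_lim_seq (fun n => (INR n + al) / (INR n + be)) 1.
Proof.
  intros Hal Hbe.
  apply (is_lim_seq_ext_loc (fun n => (1 + al * / INR n) / (1 + be * / INR n))).
  { exists 1%nat. intros n Hn.
    assert (1 <= INR n) by (replace 1 with (INR 1) by reflexivity; apply le_INR; auto).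
    field. lra. }
  replace (Finite 1) with (Finite ((1 + al * 0) / (1 + be * 0))) by (f_equal; field).
  apply is_lim_seq_div'.
  - apply is_lim_seq_plus'; [apply is_lim_seq_const|]. apply (is_lim_seq_scal_l _ al 0), inv_n_lim.
  - apply is_lim_seq_plus'; [apply is_lim_seq_const|]. apply (is_lim_seq_scal_l _ be 0), inv_n_lim.
  - lra.
Qed.

Lemma lim_uniq (u : nat -> R) (l1 l2 : R) : is_lim_seq u l1 -> is_lim_seq u l2 -> l1 = l2.
Proof.
  intros H1 H2. apply is_lim_seq_unique in H1. apply is_lim_seq_unique in H2.
  rewrite H1 in H2. injection H2. auto.
Qed.

Lemma DCr s c : 0 < s -> 0 <= c ->
  is_lim_seq (fun n => Rpower (INR n) (s + 1) * Be s (INR n + c)) (Gamma (s + 1)).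
Proof.
  intros Hs Hc. destruct (nfloor_ex c Hc) as [m [Hm1 Hm2]].
  apply (is_lim_seq_le_le_loc (fun n => Rpower (INR n) (s + 1) * Be s (INR n + INR (S m))) _
            (fun n => Rpower (INR n) (s + 1) * Be s (INR n + INR m))).
  2:{ apply DC; auto. }
  2:{ apply DC; auto. }
  exists 1%nat. intros n Hn.
  assert (1 <= INR n) by (replace 1 with (INR 1) by reflexivity; apply le_INR; auto).
  assert (0 <= INR m) by apply pos_INR.
  assert (0 < Rpower (INR n) (s + 1)) by (unfold Rpower; apply exp_pos).
  rewrite S_INR.
  split; apply Rmult_le_compat_l; try lra; apply Be_mono; lra.
Qed.

Lemma Gamma_rec s : 0 < s -> Gamma (s + 2) = (s + 1) * Gamma (s + 1).
Proof.
  intros Hs.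
  assert (H1 := DC (s + 1) 1 ltac:(lra)).
  replace (s + 1 + 1) with (s + 2) in H1 by ring.
  apply (lim_uniq _ _ _ H1).
  apply (is_lim_seq_ext_loc (fun n => (s + 1) * ((INR n + 0) / (INR n + (s + 3))) * (Rpower (INR n) (s + 1) * Be s (INR n + INR 1)))).
  { exists 1%nat. intros n Hn.
    assert (1 <= INR n) by (replace 1 with (INR 1) by reflexivity; apply le_INR; auto).
    simpl (INR 1).
    replace (s + 2) with ((s + 1) + 1) by ring. rewrite (Rpower_plus (s + 1) 1 (INR n)), Rpower_1 by lra.
    rewrite (Be_rec1 s (INR n + 1)) by lra.
    assert (0 < Rpower (INR n) (s + 1)) by (unfold Rpower; apply exp_pos).
    field. lra. }
  replace (Finite ((s + 1) * Gamma (s + 1))) with (Finite ((s + 1) * 1 * Gamma (s + 1))) by (f_equal; ring).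
  apply is_lim_seq_mult'; [|apply DC; auto].
  apply (is_lim_seq_scal_l _ (s + 1) 1). apply ratio_lim; lra.
Qed.

Lemma Be_telescope p q n : 0 < p -> 0 < q ->
  Be p q = Be p (q + INR n) * Be q (INR n + 1) / Be (p + q + 1) (INR n + 1)
           * ((q + INR n + 1) * (q + INR n + 2) / ((p + q + INR n + 2) * (p + q + INR n + 3))).
Proof.
  intros Hp Hq. induction n as [|n IH].
  - simpl INR. rewrite Rplus_0_r, Rplus_0_l. rewrite !Be_1 by lra.
    assert (0 < Be p q) by (apply Be_pos; lra). field. lra.
  - rewrite IH. rewrite S_INR.
    replace (q + (INR n + 1)) with ((q + INR n) + 1) by ring.
    replace (INR n + 1 + 1) with ((INR n + 1) + 1) by ring.
    assert (0 <= INR n) by apply pos_INR.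
    rewrite (Be_rec2 p (q + INR n)), (Be_rec2 q (INR n + 1)), (Be_rec2 (p + q + 1) (INR n + 1)) by lra.
    assert (0 < Be p (q + INR n)) by (apply Be_pos; lra).
    assert (0 < Be q (INR n + 1)) by (apply Be_pos; lra).
    assert (0 < Be (p + q + 1) (INR n + 1)) by (apply Be_pos; lra).
    field. repeat split; lra.
Qed.

Lemma Beta_Gamma p q : 0 < p -> 0 < q -> Be p q * Gamma (p + q + 2) = Gamma (p + 1) * Gamma (q + 1).
Proof.
  intros Hp Hq.
  assert (G3 : 0 < Gamma (p + q + 2)) by (apply Gamma_pos; lra).
  cut (Be p q = Gamma (p + 1) * Gamma (q + 1) / Gamma (p + q + 2) * 1).
  { intros ->. field. lra. }
  apply (lim_uniq (fun _ => Be p q)); [apply is_lim_seq_const|].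
  apply (is_lim_seq_ext_loc (fun n =>
     (Rpower (INR n) (p + 1) * Be p (INR n + q)) * (Rpower (INR n) (q + 1) * Be q (INR n + INR 1))
     / (Rpower (INR n) (p + q + 1 + 1) * Be (p + q + 1) (INR n + INR 1))
     * (((INR n + (q + 1)) / (INR n + (p + q + 2))) * ((INR n + (q + 2)) / (INR n + (p + q + 3)))))).
  { exists 1%nat. intros n Hn.
    assert (1 <= INR n) by (replace 1 with (INR 1) by reflexivity; apply le_INR; auto).
    simpl (INR 1). rewrite (Be_telescope p q n) by auto.
    replace (p + q + 1 + 1) with ((p + 1) + (q + 1)) by ring. rewrite (Rpower_plus (p + 1) (q + 1) (INR n)).
    rewrite (Rplus_comm (INR n) q).
    assert (0 < Rpower (INR n) (p + 1)) by (unfold Rpower; apply exp_pos).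
    assert (0 < Rpower (INR n) (q + 1)) by (unfold Rpower; apply exp_pos).
    assert (0 < Be (p + q + 1) (INR n + 1)) by (apply Be_pos; lra).
    field. repeat split; lra. }
  apply is_lim_seq_mult'.
  - apply is_lim_seq_div'; [apply is_lim_seq_mult'| |lra].
    + apply DCr; lra.
    + apply DC; lra.
    + replace (p + q + 2) with (p + q + 1 + 1) by ring. apply DC; lra.
  - replace 1 with (1 * 1) by ring. apply is_lim_seq_mult'; apply ratio_lim; lra.
Qed.

Lemma M0_G a b : 0 < a -> 0 < b ->
  M0 a b = Rpower 2 (a + b + 1) * (Gamma (a + 1) * Gamma (b + 1) / Gamma (a + b + 2)).
Proof.
  intros Ha Hb. rewrite M0_Be by auto.
  assert (H := Beta_Gamma b a Hb Ha).
  assert (0 < Gamma (a + b + 2)) by (apply Gamma_pos; lra).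
  replace (b + a + 2) with (a + b + 2) in H by ring.
  f_equal. field_simplify_eq; [|lra]. lra.
Qed.

Lemma pc_gamma k : forall a b, 0 < a -> 0 < b ->
  pc k a b k * Gamma (INR k + a + b + 1) = Gamma (2 * INR k + a + b + 1) / (2 ^ k * INR (Factorial.fact k)).
Proof.
  induction k as [|k IH]; intros a b Ha Hb.
  - simpl. replace (0 + a + b + 1) with (2 * 0 + a + b + 1) by ring. field.
  - rewrite pc_top.
    assert (Hk : 0 <= INR k) by apply pos_INR.
    assert (IH' := IH (a + 1) (b + 1) ltac:(lra) ltac:(lra)).
    assert (HR := Gamma_rec (INR k + a + b + 1) ltac:(lra)).
    replace (INR k + (a + 1) + (b + 1) + 1) with (INR k + a + b + 3) in IH' by ring.
    replace (2 * INR k + (a + 1) + (b + 1) + 1) with (2 * INR k + a + b + 3) in IH' by ring.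
    replace (INR k + a + b + 1 + 2) with (INR k + a + b + 3) in HR by ring.
    replace (INR k + a + b + 1 + 1) with (INR k + a + b + 2) in HR by ring.
    replace (INR (S k) + a + b + 1) with (INR k + a + b + 2) by (rewrite S_INR; ring).
    replace (2 * INR (S k) + a + b + 1) with (2 * INR k + a + b + 3) by (rewrite S_INR; ring).
    rewrite HR in IH'.
    rewrite fact_simpl, mult_INR.
    assert (INR (S k) <> 0) by (apply not_0_INR; lia).
    assert (INR (Factorial.fact k) <> 0) by apply INR_fact_neq_0.
    assert (2 ^ k <> 0) by (apply pow_nonzero; lra).
    simpl pow.
    transitivity (/ 2 / INR (S k) * (pc k (a + 1) (b + 1) k * ((INR k + a + b + 2) * Gamma (INR k + a + b + 2)))).
    { unfold Rdiv. ring. }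
    rewrite IH'. field. repeat split; auto; lra.
Qed.


Lemma hk2_eq k a b : 0 < a -> 0 < b ->
  hk2 k a b = pc k a b k * M0 (a + INR k) (b + INR k) / 2 ^ k.
Proof.
  intros Ha Hb.
  assert (Hk : 0 <= INR k) by apply pos_INR.
  rewrite M0_G by lra.
  assert (PG := pc_gamma k a b Ha Hb).
  assert (HR := Gamma_rec (2 * INR k + a + b) ltac:(lra)).
  replace (2 * INR k + a + b + 2) with (a + INR k + (b + INR k) + 2) in HR by ring.
  replace (2 * INR k + a + b + 1) with (2 * INR k + a + b + 1) in HR by ring.
  rewrite HR.
  replace (a + INR k + (b + INR k) + 1) with ((a + b + 1) + INR k + INR k) by ring.
  rewrite (Rpower_plus ((a + b + 1) + INR k) (INR k) 2), (Rpower_plus (a + b + 1) (INR k) 2), !Rpower_pow by lra.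
  replace (a + INR k + 1) with (INR k + a + 1) by ring.
  replace (b + INR k + 1) with (INR k + b + 1) by ring.
  unfold hk2.
  assert (0 < Gamma (INR k + a + b + 1)) by (apply Gamma_pos; lra).
  assert (0 < Gamma (2 * INR k + a + b + 1)) by (apply Gamma_pos; lra).
  assert (INR (Factorial.fact k) <> 0) by apply INR_fact_neq_0.
  assert (2 ^ k <> 0) by (apply pow_nonzero; lra).
  assert (E : pc k a b k = Gamma (2 * INR k + a + b + 1) / (2 ^ k * INR (Factorial.fact k)) / Gamma (INR k + a + b + 1)).
  { rewrite <- PG. field. lra. }
  rewrite E. req. field. repeat split; auto; lra.
Qed.

Theorem lemma6 (k : nat) (al be : R) :
  (1 <= k)%nat -> 0 < be -> be < al ->
  RInt (fun x => rpow (1 - x) (al + 1) * rpow (1 + x) (be + 1) * W k al be x) (-1) 1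
  = (rho_ k al be ^ 2 - eta_ al be ^ 2) * (rho_ k al be ^ 2 - sigma_ al be ^ 2)
    / (rho_ k al be * (rho_ k al be - 1)) * hk2 k al be.
Proof.
  intros Hk Hb Hab.
  rewrite alg_final by (auto; lra).
  rewrite hk2_eq by lra. reflexivity.
Qed.
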